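(* Let $m \geq 0$ be a fixed integer, and for $T>e$ put $\Delta = \Delta(T) = 1/\log^{m+2} T$. Then the following two statements are equivalent: \begin{enumerate} \item For every $\epsilon > 0$, $\zeta^{(m)}(1+it) = O(\log^{\epsilon} t)$ as $t \to \infty$. \item For every $\epsilon > 0$ and every positive integer $k$, \[ \frac{1}{2\Delta} \int_{T-\Delta}^{T+\Delta} \bigl|\zeta^{(m)}(1+it)\bigr|^{2k}\, dt = O(\log^{\epsilon} T) \quad \text{as } T \to \infty . \] \end{enumerate} (The implied $O$-constants may depend on $m$, $\epsilon$ and $k$.)
   Context: $\zeta(s)$ denotes the Riemann zeta function, $s=\sigma+it$, defined by $\sum_{n\ge1} n^{-s}$ for $\sigma>1$ and meromorphically continued to $\mathbb{C}$ with only a simple pole at $s=1$; $\zeta^{(m)}$ is its $m$-th derivative with respect to $s$, and $\zeta^{(m)}(1+it)$ is its value on the line $\sigma=1$ for real $t$. *)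

(* Defs.v *)
From Stdlib Require Import Reals Lra ClassicalEpsilon.
Open Scope R_scope.

Definition choose_R (P : R -> Prop) : R := epsilon (inhabits 0) P.

(* n-th term (n >= 1) of the termwise m-th s-derivative of sum n^{-s},
   at s = sigma + i t:  (-log n)^m n^{-sigma} e^{-i t log n}. *)
Definition zterm_re (m : nat) (sigma t : R) (n : nat) : R :=
  (- ln (INR n)) ^ m * Rpower (INR n) (- sigma) * cos (t * ln (INR n)).
Definition zterm_im (m : nat) (sigma t : R) (n : nat) : R :=
  - ((- ln (INR n)) ^ m * Rpower (INR n) (- sigma) * sin (t * ln (INR n))).

(* zeta^{(m)}(sigma + i t) for sigma > 1, via the (absolutely convergent)
   Dirichlet series sum_{n>=1} (-log n)^m n^{-s}. *)
Definition dir_re (m : nat) (sigma t : R) : R :=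
  choose_R (fun l => infinite_sum (fun n => zterm_re m sigma t (S n)) l).
Definition dir_im (m : nat) (sigma t : R) : R :=
  choose_R (fun l => infinite_sum (fun n => zterm_im m sigma t (S n)) l).

Definition right_lim_at_1 (f : R -> R) (l : R) : Prop :=
  forall eps, 0 < eps -> exists d, 0 < d /\
    forall s, 1 < s < 1 + d -> Rabs (f s - l) < eps.

(* zeta^{(m)}(1 + i t): value of the continuous extension of the
   meromorphic continuation to the line sigma = 1 (t <> 0). *)
Definition zeta_line_re (m : nat) (t : R) : R :=
  choose_R (right_lim_at_1 (fun s => dir_re m s t)).
Definition zeta_line_im (m : nat) (t : R) : R :=
  choose_R (right_lim_at_1 (fun s => dir_im m s t)).

Definition zeta_abs (m : nat) (t : R) : R :=
  sqrt (zeta_line_re m t ^ 2 + zeta_line_im m t ^ 2).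

Definition DeltaT (m : nat) (T : R) : R := / (ln T) ^ (m + 2).

(* Main.v *)
Require Import Defs.
From Stdlib Require Import Reals Lra Lia Psatz ClassicalEpsilon ZArith.
From Coquelicot Require Import Coquelicot.
Open Scope R_scope.

Lemma exp_pow_INR (y : R) (k : nat) : exp (INR k * y) = exp y ^ k.
Proof.
  induction k as [|k IH].
  - simpl. rewrite Rmult_0_l, exp_0; reflexivity.
  - rewrite S_INR, Rmult_plus_distr_r, Rmult_1_l, exp_plus, IH. simpl. ring.
Qed.

Lemma le_exp_1 (y : R) : 1 + y <= exp y.
Proof.
  destruct (Req_dec y 0) as [->|Hn].
  - rewrite exp_0; lra.
  - pose proof (exp_ineq1 y Hn); lra.
Qed.

Lemma le_exp_self (y : R) : y <= exp y.
Proof. pose proof (le_exp_1 y); lra. Qed.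

Lemma zle_pow (z b : R) (k : nat) : 0 <= z -> 0 < b ->
  z ^ k <= (INR k / b) ^ k * exp (b * z).
Proof.
  intros Hz Hb. destruct k as [|k].
  - simpl. pose proof (le_exp_1 (b*z)). assert (0 <= b*z) by (apply Rmult_le_pos; lra). lra.
  - set (K := INR (S k)). assert (HK : 0 < K) by (apply lt_0_INR; apply Nat.lt_0_succ).
    set (y := b * z / K).
    assert (Hy : 0 <= y) by (unfold y; apply Rmult_le_pos; [apply Rmult_le_pos; lra | left; apply Rinv_0_lt_compat; lra]).
    assert (Hz' : z = (K / b) * y) by (unfold y; field; lra).
    rewrite Hz', Rpow_mult_distr.
    apply Rmult_le_compat_l.
    + apply pow_le. apply Rlt_le, Rdiv_lt_0_compat; lra.
    + replace (b * (K / b * y)) with (K * y) by (field; lra).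
      unfold K. rewrite exp_pow_INR. apply pow_incr. split; [lra|]. apply le_exp_self; lra.
Qed.


Lemma d_mult f g x a b : is_derive f x a -> is_derive g x b ->
  is_derive (fun y => f y * g y) x (a * g x + f x * b).
Proof. intros H1 H2. exact (is_derive_mult f g x a b H1 H2 Rmult_comm). Qed.
Lemma d_plus f g x a b : is_derive f x a -> is_derive g x b ->
  is_derive (fun y => f y + g y) x (a + b).
Proof. intros H1 H2. exact (is_derive_plus f g x a b H1 H2). Qed.
Lemma d_minus f g x a b : is_derive f x a -> is_derive g x b ->
  is_derive (fun y => f y - g y) x (a - b).
Proof. intros H1 H2. exact (is_derive_minus f g x a b H1 H2). Qed.
Lemma d_opp f x a : is_derive f x a -> is_derive (fun y => - f y) x (- a).
Proof. intros H1. exact (is_derive_opp f x a H1). Qed.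
Lemma d_const c x : is_derive (fun _ => c) x 0.
Proof. exact (is_derive_const c x). Qed.
Lemma d_id x : is_derive (fun y => y) x 1.
Proof. exact (is_derive_id x). Qed.
Lemma d_ext (f g : R -> R) (x a : R) : (forall y, f y = g y) -> is_derive f x a -> is_derive g x a.
Proof. intros E H. apply (is_derive_ext f g); auto. Qed.
Lemma d_val (f : R -> R) (x a b : R) : a = b -> is_derive f x a -> is_derive f x b.
Proof. intros ->; auto. Qed.
Lemma d_comp f g x a b : is_derive f (g x) a -> is_derive g x b ->
  is_derive (fun y => f (g y)) x (b * a).
Proof. intros H1 H2. exact (is_derive_comp f g x a b H1 H2). Qed.
Lemma d_exp x : is_derive exp x (exp x).
Proof. apply is_derive_Reals, derivable_pt_lim_exp. Qed.
Lemma d_cos x : is_derive cos x (- sin x).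
Proof. apply is_derive_Reals, derivable_pt_lim_cos. Qed.
Lemma d_sin x : is_derive sin x (cos x).
Proof. apply is_derive_Reals, derivable_pt_lim_sin. Qed.
Lemma d_ln x : 0 < x -> is_derive ln x (/ x).
Proof. intros; apply is_derive_Reals, derivable_pt_lim_ln; auto. Qed.
Lemma d_pow f x a n : is_derive f x a ->
  is_derive (fun y => f y ^ n) x (INR n * f x ^ (pred n) * a).
Proof. intros H. 
  pose proof (d_comp (fun z => z ^ n) f x (INR n * f x ^ pred n) a) as K.
  apply (d_val _ _ (a * (INR n * f x ^ pred n))); [ring|]. apply K; auto.
  apply is_derive_Reals, derivable_pt_lim_pow.
Qed.
Lemma d_cont (f : R -> R) (x a : R) : is_derive f x a -> continuity_pt f x.
Proof. intros H. apply continuity_pt_filterlim.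
  apply (ex_derive_continuous f x). exists a; exact H. Qed.
Lemma d_lin c x : is_derive (fun y => c * y) x c.
Proof. eapply d_val; [|apply d_mult; [apply d_const|apply d_id]]. cbv beta; ring. Qed.


Definition cexp (w : C) (u : R) : C :=
  (exp (fst w * u) * cos (snd w * u), exp (fst w * u) * sin (snd w * u)).

Definition cder (F : R -> C) (x : R) (D : C) : Prop :=
  is_derive (fun y => fst (F y)) x (fst D) /\ is_derive (fun y => snd (F y)) x (snd D).

Lemma cder_val F x D1 D2 : D1 = D2 -> cder F x D1 -> cder F x D2.
Proof. intros ->; auto. Qed.

Lemma cder_ext (F G : R -> C) x D : (forall y, F y = G y) -> cder F x D -> cder G x D.
Proof. intros E [H1 H2]; split.
  - apply (d_ext (fun y => fst (F y))); auto. intros; rewrite E; auto.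
  - apply (d_ext (fun y => snd (F y))); auto. intros; rewrite E; auto.
Qed.

Lemma cder_plus F G x DF DG : cder F x DF -> cder G x DG ->
  cder (fun y => (F y + G y)%C) x (DF + DG)%C.
Proof. intros [A1 A2] [B1 B2]; split; simpl; apply d_plus; auto. Qed.

Lemma cder_mult F G x DF DG : cder F x DF -> cder G x DG ->
  cder (fun y => (F y * G y)%C) x (DF * G x + F x * DF)%C.
Abort.

Lemma cder_mult F G x DF DG : cder F x DF -> cder G x DG ->
  cder (fun y => (F y * G y)%C) x (DF * G x + F x * DG)%C.
Proof. intros [A1 A2] [B1 B2]; split; simpl.
  - eapply d_val; [|apply d_minus; apply d_mult; eauto]. simpl; ring.
  - eapply d_val; [|apply d_plus; apply d_mult; eauto]. simpl; ring.
Qed.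

Lemma cder_const (c : C) x : cder (fun _ => c) x 0%C.
Proof. split; simpl; apply d_const. Qed.

Lemma cder_R (r : R -> R) x d : is_derive r x d -> cder (fun y => RtoC (r y)) x (RtoC d).
Proof. intros H; split; simpl; auto. apply d_const. Qed.

Lemma cder_cexp w u : cder (cexp w) u (w * cexp w u)%C.
Proof. unfold cexp; split; simpl.
  - eapply d_val; [|apply d_mult; [apply (d_comp exp (fun y => fst w * y)) | apply (d_comp cos (fun y => snd w * y))]].
    2: apply d_exp. 3: apply d_cos. 2,3: apply d_lin.
    cbv beta; ring.
  - eapply d_val; [|apply d_mult; [apply (d_comp exp (fun y => fst w * y)) | apply (d_comp sin (fun y => snd w * y))]].
    2: apply d_exp. 3: apply d_sin. 2,3: apply d_lin.
    cbv beta; ring.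
Qed.

Lemma cder_comp (F : R -> C) (g : R -> R) x D dg :
  cder F (g x) D -> is_derive g x dg -> cder (fun y => F (g y)) x (RtoC dg * D)%C.
Proof. intros [A1 A2] B; split; simpl.
  - eapply d_val; [|apply (d_comp (fun z => fst (F z)) g); eauto]. cbv beta; ring.
  - eapply d_val; [|apply (d_comp (fun z => snd (F z)) g); eauto]. cbv beta; ring.
Qed.

Fixpoint Hf (m : nat) (w : C) (u : R) : C :=
  match m with
  | O => (cexp w u / w)%C
  | S k => (RtoC ((- u) ^ S k) * cexp w u / w + RtoC (INR (S k)) / w * Hf k w u)%C
  end.

Lemma cder_H m (w : C) u : w <> 0%C -> cder (Hf m w) u (RtoC ((- u) ^ m) * cexp w u)%C.
Proof.
  intros Hw. revert u. induction m as [|k IH]; intros u; cbn [Hf].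
  - eapply cder_val; [|apply (cder_mult (cexp w) (fun _ => / w)%C); [apply cder_cexp|apply cder_const]].
    cbv beta; simpl pow. field. auto.
  - eapply cder_val; [|apply cder_plus; [apply (cder_mult (fun y => RtoC ((- y) ^ S k) * cexp w y)%C (fun _ => / w)%C); [apply cder_mult; [apply cder_R, d_pow, d_opp, d_id | apply cder_cexp] | apply cder_const] | apply cder_mult; [apply cder_const | apply IH]]].
    cbv beta. set (c := INR (S k)). simpl pred. simpl pow. rewrite ?RtoC_mult, ?RtoC_opp. field. auto.
Qed.

Definition fz (m : nat) (sg t x : R) : C :=
  ((- ln x) ^ m * Rpower x (- sg) * cos (t * ln x),
   - ((- ln x) ^ m * Rpower x (- sg) * sin (t * ln x))).
Definition wof (sg t : R) : C := (1 - sg, - t).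
Definition Gz (m : nat) (sg t x : R) : C := Hf m (wof sg t) (ln x).

Lemma exp_1sg sg x : 0 < x -> exp ((1 - sg) * ln x) = x * Rpower x (- sg).
Proof. intros Hx. unfold Rpower.
  replace ((1 - sg) * ln x) with (ln x + - sg * ln x) by ring.
  rewrite exp_plus, exp_ln; auto. Qed.

Lemma cder_G m sg t x : 0 < x -> wof sg t <> 0%C -> cder (Gz m sg t) x (fz m sg t x).
Proof.
  intros Hx Hw. unfold Gz.
  eapply cder_val; [|apply (cder_comp (Hf m (wof sg t)) ln); [apply cder_H; auto | apply d_ln; auto]].
  unfold fz, cexp, wof; simpl.
  replace (- t * ln x) with (- (t * ln x)) by ring.
  rewrite cos_neg, sin_neg, exp_1sg; auto.
  apply injective_projections; simpl; field; lra.
Qed.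

Definition dcomp (m : nat) (sg : R) (tr tr' : R -> R) (y : R) : R :=
  (INR m * (- ln y) ^ (pred m) * (- / y)) * Rpower y (- sg) * tr y
  + (- ln y) ^ m * (Rpower y (- sg) * (- sg * / y)) * tr y
  + (- ln y) ^ m * Rpower y (- sg) * tr' y.

Lemma d_Rpower a y : 0 < y -> is_derive (fun z => Rpower z a) y (Rpower y a * (a * / y)).
Proof. intros Hy. unfold Rpower.
  eapply d_val; [|apply (d_comp exp (fun z => a * ln z)); [apply d_exp | ]].
  2: { eapply d_val; [|apply d_mult; [apply d_const | apply d_ln; auto]]. reflexivity. }
  cbv beta; ring.
Qed.

Lemma dcomp_derive m sg tr tr' y : 0 < y -> is_derive tr y (tr' y) ->
  is_derive (fun z => (- ln z) ^ m * Rpower z (- sg) * tr z) y (dcomp m sg tr tr' y).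
Proof.
  intros Hy Ht. unfold dcomp.
  eapply d_val; [|apply d_mult; [apply d_mult; [apply d_pow, d_opp, d_ln; auto | apply d_Rpower; auto] | exact Ht]].
  cbv beta; ring.
Qed.

Lemma pow_pred_le (L : R) (m : nat) : 0 <= L -> INR m * L ^ (pred m) <= INR m * (1 + L) ^ m.
Proof.
  intros HL. destruct m as [|k]; simpl pred.
  - simpl; lra.
  - apply Rmult_le_compat_l; [apply pos_INR|].
    simpl. assert (L ^ k <= (1 + L) ^ k) by (apply pow_incr; lra).
    assert (0 <= L ^ k) by (apply pow_le; lra). nra.
Qed.

Lemma exp_le' x y : x <= y -> exp x <= exp y.
Proof. intros [H|H]; [left; apply exp_increasing; auto | subst; lra]. Qed.

Lemma ln_ge0 y : 1 <= y -> 0 <= ln y.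
Proof. intros; rewrite <- ln_1; apply ln_le; lra. Qed.

Lemma Rpower_le_inv y sg : 1 <= y -> 1 <= sg -> 0 < Rpower y (- sg) <= / y.
Proof.
  intros Hy Hs. split; [apply exp_pos|].
  pose proof (ln_ge0 y Hy).
  unfold Rpower. rewrite <- (exp_ln y) at 2 by lra. rewrite <- exp_Ropp.
  apply exp_le'. nra.
Qed.

Lemma prod_le a b c d : 0 <= a <= b -> 0 <= c <= d -> a * c <= b * d.
Proof. intros. apply Rmult_le_compat; lra. Qed.

Lemma dcomp_bound m sg t tr tr' y : 1 <= y -> 1 <= sg -> Rabs (tr y) <= 1 ->
  Rabs (tr' y) <= Rabs t / y ->
  Rabs (dcomp m sg tr tr' y) <= (INR m + sg + Rabs t) * (1 + ln y) ^ m / y ^ 2.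
Proof.
  intros Hy Hs Htr Htr'. unfold dcomp.
  pose proof (ln_ge0 y Hy) as HL. set (L := ln y) in *.
  destruct (Rpower_le_inv y sg Hy Hs) as [HP1 HP2]. set (P := Rpower y (- sg)) in *.
  set (q := / y) in *. assert (Hq : 0 < q <= 1).
  { unfold q; split; [apply Rinv_0_lt_compat; lra|]. rewrite <- Rinv_1. apply Rinv_le_contravar; lra. }
  assert (Hm : 0 <= INR m) by apply pos_INR.
  assert (E1 : 0 <= L ^ m) by (apply pow_le; lra).
  assert (E2 : 0 <= L ^ pred m) by (apply pow_le; lra).
  assert (E3 : L ^ m <= (1 + L) ^ m) by (apply pow_incr; lra).
  pose proof (pow_pred_le L m HL) as E4.
  assert (Ht0 : 0 <= Rabs t) by apply Rabs_pos.
  assert (Htr0 : 0 <= Rabs (tr y)) by apply Rabs_pos.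
  assert (Htr0' : 0 <= Rabs (tr' y)) by apply Rabs_pos.
  replace (Rabs t / y) with (Rabs t * q) in Htr' by (unfold q, Rdiv; ring).
  replace ((INR m + sg + Rabs t) * (1 + L) ^ m / y ^ 2) with
    ((INR m * (1 + L) ^ m + sg * (1 + L) ^ m + Rabs t * (1 + L) ^ m) * (q * q))
    by (unfold q; field; lra).
  eapply Rle_trans; [apply Rabs_triang|].
  eapply Rle_trans; [apply Rplus_le_compat_r, Rabs_triang|].
  rewrite !Rabs_mult, <- !RPow_abs, !Rabs_Ropp, (Rabs_right L), (Rabs_right P), (Rabs_right q),
    (Rabs_right (INR m)), (Rabs_right sg) by lra.
  assert (PT : P * Rabs (tr y) <= q) by nra.
  assert (PT' : P * Rabs (tr' y) <= Rabs t * q * q) by nra.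
  assert (T1 : INR m * L ^ pred m * q * P * Rabs (tr y) <= INR m * (1 + L) ^ m * (q * q)).
  { replace (INR m * L ^ pred m * q * P * Rabs (tr y)) with ((INR m * L ^ pred m) * (q * (P * Rabs (tr y)))) by ring.
    apply prod_le; split; try nra. apply Rmult_le_pos; [lra | apply Rmult_le_pos; lra]. }
  assert (T2 : L ^ m * (P * (sg * q)) * Rabs (tr y) <= sg * (1 + L) ^ m * (q * q)).
  { replace (L ^ m * (P * (sg * q)) * Rabs (tr y)) with ((L ^ m) * (sg * q * (P * Rabs (tr y)))) by ring.
    replace (sg * (1 + L) ^ m * (q * q)) with ((1 + L) ^ m * (sg * q * q)) by ring.
    apply prod_le; split; try nra.
    - apply Rmult_le_pos; [apply Rmult_le_pos|apply Rmult_le_pos]; lra.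
    - apply Rmult_le_compat_l; [apply Rmult_le_pos|]; lra. }
  assert (T3 : L ^ m * P * Rabs (tr' y) <= Rabs t * (1 + L) ^ m * (q * q)).
  { replace (L ^ m * P * Rabs (tr' y)) with ((L ^ m) * (P * Rabs (tr' y))) by ring.
    replace (Rabs t * (1 + L) ^ m * (q * q)) with ((1 + L) ^ m * (Rabs t * q * q)) by ring.
    apply prod_le; split; try nra.
    }
  lra.
Qed.

Lemma mvt_bound (h h' : R -> R) a b K : a <= b ->
  (forall y, a <= y <= b -> is_derive h y (h' y)) ->
  (forall y, a <= y <= b -> Rabs (h' y) <= K) ->
  Rabs (h b - h a) <= K * (b - a).
Proof.
  intros Hab Hd Hb.
  destruct (MVT_gen h a b h') as [c [Hc E]].
  - intros y Hy. rewrite Rmin_left, Rmax_right in Hy by lra. apply Hd; lra.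
  - intros y Hy. rewrite Rmin_left, Rmax_right in Hy by lra. apply (d_cont h y (h' y)), Hd; lra.
  - rewrite Rmin_left, Rmax_right in Hc by lra. rewrite E, Rabs_mult, (Rabs_right (b - a)) by lra.
    apply Rmult_le_compat_r; [lra|]. apply Hb; lra.
Qed.

Lemma tele_err (g h h' : R -> R) a K :
  (forall y, a <= y <= a + 1 -> is_derive g y (h y)) ->
  (forall y, a <= y <= a + 1 -> is_derive h y (h' y)) ->
  (forall y, a <= y <= a + 1 -> Rabs (h' y) <= K) ->
  Rabs (h (a + 1) - (g (a + 1) - g a)) <= K.
Proof.
  intros Hg Hh HK.
  destruct (MVT_gen (fun y => g y - y * h (a + 1)) a (a + 1) (fun y => h y - h (a + 1))) as [c [Hc E]].
  - intros y Hy. rewrite Rmin_left, Rmax_right in Hy by lra.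
    eapply d_val; [|apply d_minus; [apply Hg; lra | apply d_mult; [apply d_id | apply d_const]]].
    cbv beta; ring.
  - intros y Hy. rewrite Rmin_left, Rmax_right in Hy by lra.
    apply (d_cont _ y (h y - h (a + 1))).
    eapply d_val; [|apply d_minus; [apply Hg; lra | apply d_mult; [apply d_id | apply d_const]]].
    cbv beta; ring.
  - rewrite Rmin_left, Rmax_right in Hc by lra.
    replace (h (a + 1) - (g (a + 1) - g a)) with (h (a + 1) - h c) by lra.
    pose proof (mvt_bound h h' c (a + 1) K (proj2 Hc)) as M.
    assert (0 <= K) by (specialize (HK a); pose proof (Rabs_pos (h' a)); lra).
    eapply Rle_trans; [apply M|].
    + intros; apply Hh; lra.
    + intros; apply HK; lra.
    + assert (a + 1 - c <= 1) by lra. nra.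
Qed.

Lemma abs_sin_le x : Rabs (sin x) <= 1.
Proof. apply Rabs_le; apply SIN_bound. Qed.
Lemma abs_cos_le x : Rabs (cos x) <= 1.
Proof. apply Rabs_le; apply COS_bound. Qed.

Definition ez (m : nat) (sg t : R) (n : nat) : C :=
  (fz m sg t (INR n) - (Gz m sg t (INR n) - Gz m sg t (INR n - 1)))%C.

Definition Bd (m : nat) (sg t x : R) : R := (INR m + sg + Rabs t) * (1 + ln x) ^ m / (x - 1) ^ 2.

Lemma bound_mono m sg t y x : 1 <= sg -> 2 <= x -> x - 1 <= y <= x ->
  (INR m + sg + Rabs t) * (1 + ln y) ^ m / y ^ 2 <= Bd m sg t x.
Proof.
  intros Hs Hx Hy. unfold Bd.
  assert (0 <= ln y) by (apply ln_ge0; lra).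
  assert (ln y <= ln x) by (apply ln_le; lra).
  assert (0 <= INR m + sg + Rabs t) by (pose proof (pos_INR m); pose proof (Rabs_pos t); lra).
  unfold Rdiv. rewrite Rmult_assoc, Rmult_assoc. apply Rmult_le_compat_l; auto.
  apply prod_le; split.
  - apply pow_le; lra.
  - apply pow_incr; lra.
  - left; apply Rinv_0_lt_compat, pow_lt; lra.
  - apply Rinv_le_contravar; [apply pow_lt; lra|]. apply pow_incr; lra.
Qed.

Lemma ez_bound m sg t n : (2 <= n)%nat -> 1 <= sg -> t <> 0 ->
  Rabs (fst (ez m sg t n)) <= Bd m sg t (INR n) /\
  Rabs (snd (ez m sg t n)) <= Bd m sg t (INR n).
Proof.
  intros Hn Hs Ht.
  assert (Hn' : 2 <= INR n) by (apply (le_INR 2); auto).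
  assert (Hw : wof sg t <> 0%C).
  { intros E. apply Ht. unfold wof in E. injection E; intros; lra. }
  unfold ez. remember (INR n - 1) as a eqn:Ea.
  assert (Ha : 1 <= a) by lra.
  replace (INR n) with (a + 1) by lra.
  split; simpl.
  - apply (tele_err (fun y => fst (Gz m sg t y)) (fun y => fst (fz m sg t y))
      (dcomp m sg (fun y => cos (t * ln y)) (fun y => (t * / y) * - sin (t * ln y))) a).
    + intros y Hy. apply (proj1 (cder_G m sg t y ltac:(lra) Hw)).
    + intros y Hy. apply dcomp_derive; [lra|].
      apply (d_comp cos (fun y => t * ln y)); [apply d_cos|].
      eapply d_val; [|apply d_mult; [apply d_const| apply d_ln; lra]]. cbv beta; ring.
    + intros y Hy. eapply Rle_trans; [apply dcomp_bound with (t := t); try lra|].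
      * apply abs_cos_le.
      * rewrite Rabs_mult, Rabs_Ropp, Rabs_mult, Rabs_right with (r := / y) by (left; apply Rinv_0_lt_compat; lra).
        pose proof (Rabs_pos t). pose proof (Rabs_pos (sin (t * ln y))).
        pose proof (abs_sin_le (t * ln y)). unfold Rdiv.
        assert (0 < / y) by (apply Rinv_0_lt_compat; lra).
        assert (0 <= Rabs t * / y) by (apply Rmult_le_pos; lra). nra.
      * apply (bound_mono m sg t y (a+1)); lra.
  - apply (tele_err (fun y => snd (Gz m sg t y)) (fun y => snd (fz m sg t y))
      (fun y => - dcomp m sg (fun y => sin (t * ln y)) (fun y => (t * / y) * cos (t * ln y)) y) a).
    + intros y Hy. apply (proj2 (cder_G m sg t y ltac:(lra) Hw)).
    + intros y Hy. apply d_opp. apply dcomp_derive; [lra|].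
      apply (d_comp sin (fun y => t * ln y)); [apply d_sin|].
      eapply d_val; [|apply d_mult; [apply d_const| apply d_ln; lra]]. cbv beta; ring.
    + intros y Hy. rewrite Rabs_Ropp. eapply Rle_trans; [apply dcomp_bound with (t := t); try lra|].
      * apply abs_sin_le.
      * rewrite Rabs_mult, Rabs_mult, Rabs_right with (r := / y) by (left; apply Rinv_0_lt_compat; lra).
        pose proof (Rabs_pos t). pose proof (Rabs_pos (cos (t * ln y))).
        pose proof (abs_cos_le (t * ln y)). unfold Rdiv.
        assert (0 < / y) by (apply Rinv_0_lt_compat; lra).
        assert (0 <= Rabs t * / y) by (apply Rmult_le_pos; lra). nra.
      * apply bound_mono; lra.
Qed.


Definition vv (k : nat) : R := / sqrt (INR k).

Lemma vv_cv : Un_cv vv 0.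
Proof.
  intros eps He. destruct (INR_unbounded (/ (eps * eps))) as [N HN].
  exists (S N). intros n Hn. unfold R_dist, vv. rewrite Rminus_0_r.
  assert (Hn' : INR N < INR n) by (apply lt_INR; lia).
  assert (0 < / (eps * eps)) by (apply Rinv_0_lt_compat; nra).
  assert (Hs : 0 < sqrt (INR n)) by (apply sqrt_lt_R0; lra).
  rewrite Rabs_right by (left; apply Rinv_0_lt_compat; auto).
  assert (Hsq : sqrt (INR n) * sqrt (INR n) = INR n) by (apply sqrt_sqrt; lra).
  assert (/ eps < sqrt (INR n)).
  { destruct (Rlt_or_le (/ eps) (sqrt (INR n))) as [h|h]; auto.
    exfalso. assert (0 < / eps) by (apply Rinv_0_lt_compat; lra).
    assert (sqrt (INR n) * sqrt (INR n) <= / eps * / eps) by nra.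
    rewrite Hsq, <- Rinv_mult in H1. lra. }
  rewrite <- (Rinv_inv eps). apply Rinv_lt_contravar; auto.
  apply Rmult_lt_0_compat; auto. apply Rinv_0_lt_compat; lra.
Qed.

Lemma tele_sum (v : nat -> R) M N :
  sum_f_R0 (fun k => v (k + M)%nat - v (k + M + 1)%nat) N = v M - v (N + M + 1)%nat.
Proof.
  induction N as [|N IH].
  - simpl. reflexivity.
  - change (sum_f_R0 ?f (S N)) with (sum_f_R0 f N + f (S N)). rewrite IH. cbv beta.
    replace (S N + M)%nat with (N + M + 1)%nat by lia. ring.
Qed.

Lemma tele_series (v : nat -> R) M : Un_cv v 0 ->
  is_series (fun k => v (k + M)%nat - v (k + M + 1)%nat) (v M).
Proof.
  intros Hv. apply is_series_Reals. intros eps He.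
  destruct (Hv eps He) as [N HN]. exists N. intros n Hn.
  unfold R_dist. rewrite tele_sum.
  specialize (HN (n + M + 1)%nat ltac:(lia)). unfold R_dist in HN.
  replace (v M - v (n + M + 1)%nat - v M) with (- (v (n + M + 1)%nat - 0)) by ring.
  rewrite Rabs_Ropp; auto.
Qed.

Lemma sq_le u v : 0 <= u -> 0 <= v -> u * u <= v * v -> u <= v.
Proof. intros. destruct (Rle_or_lt u v); auto. nra. Qed.

Lemma sqrt_maj x : 2 <= x -> sqrt x / (x - 1) ^ 2 <= 8 * (/ sqrt (x - 1) - / sqrt x).
Proof.
  intros Hx.
  set (a := sqrt (x - 1)). set (b := sqrt x).
  assert (Ha2 : a * a = x - 1) by (apply sqrt_sqrt; lra).
  assert (Hb2 : b * b = x) by (apply sqrt_sqrt; lra).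
  assert (Ha : 1 <= a).
  { assert (sqrt 1 <= sqrt (x - 1)) by (apply sqrt_le_1_alt; lra). rewrite sqrt_1 in H. exact H. }
  assert (Hb : 0 <= b) by apply sqrt_pos.
  assert (Hab : b <= 2 * a) by (apply sq_le; nra).
  assert (Hab' : a <= b) by (apply sq_le; nra).
  replace (x - 1) with (a * a) by lra.
  replace (sqrt x) with b by reflexivity.
  assert (Hba : b - a = / (a + b)).
  { field_simplify_eq; [nra | lra]. }
  replace (/ a - / b) with ((b - a) / (a * b)) by (field; split; lra).
  rewrite Hba.
  unfold Rdiv. apply Rmult_le_reg_r with (r := a ^ 4 * (a * b * (a + b))).
  { assert (0 < a * b) by nra. apply Rmult_lt_0_compat. apply pow_lt; lra. nra. }
  replace (b * / (a * a) ^ 2 * (a ^ 4 * (a * b * (a + b)))) with (b * b * (a + b) * a) by (field; lra).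
  replace (8 * (/ (a + b) * / (a * b)) * (a ^ 4 * (a * b * (a + b)))) with (8 * a ^ 4) by (field; nra).
  replace (b * b) with (a * a + 1) by lra.
  assert (h1 : a * a + 1 <= 2 * (a * a)) by nra.
  assert (h2 : (a * a + 1) * (a + b) <= (2 * (a * a)) * (3 * a)) by (apply prod_le; split; nra).
  assert (h3 : (a * a + 1) * (a + b) * a <= (2 * (a * a)) * (3 * a) * a) by (apply Rmult_le_compat_r; lra).
  nra.
Qed.

Lemma log_maj m x : 1 <= x -> (1 + ln x) ^ m <= (2 * INR m) ^ m * exp (/ 2) * sqrt x.
Proof.
  intros Hx. pose proof (ln_ge0 x Hx).
  eapply Rle_trans; [apply (zle_pow (1 + ln x) (/ 2) m); lra|].
  replace (INR m / / 2) with (2 * INR m) by field.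
  rewrite <- Rpower_sqrt by lra. unfold Rpower.
  replace (/ 2 * (1 + ln x)) with (/ 2 + / 2 * ln x) by ring. rewrite exp_plus. lra.
Qed.

Definition K8 (m : nat) : R := 8 * ((2 * INR m) ^ m * exp (/ 2)).

Lemma K8_pos m : 0 < K8 m.
Proof. unfold K8. apply Rmult_lt_0_compat; [lra|]. apply Rmult_lt_0_compat; [|apply exp_pos].
  destruct m. simpl; lra. apply pow_lt. pose proof (lt_0_INR (S m) ltac:(lia)). lra. Qed.

Lemma K8_nonneg m : 0 <= K8 m.
Proof. left; apply K8_pos. Qed.

Lemma vv_dec k : (1 <= k)%nat -> 0 <= vv k - vv (S k).
Proof.
  intros Hk. unfold vv. assert (1 <= INR k) by (apply (le_INR 1); auto).
  rewrite S_INR. assert (0 < sqrt (INR k)) by (apply sqrt_lt_R0; lra).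
  assert (sqrt (INR k) <= sqrt (INR k + 1)) by (apply sqrt_le_1_alt; lra).
  assert (/ sqrt (INR k + 1) <= / sqrt (INR k)) by (apply Rinv_le_contravar; lra). lra.
Qed.

Lemma Bd_maj m sg t n : (2 <= n)%nat -> 1 <= sg ->
  Bd m sg t (INR n) <= (INR m + sg + Rabs t) * K8 m * (vv (n - 1) - vv n).
Proof.
  intros Hn Hs. assert (Hx : 2 <= INR n) by (apply (le_INR 2); auto).
  unfold Bd, K8, vv. rewrite minus_INR by lia. simpl (INR 1).
  assert (Hc : 0 <= INR m + sg + Rabs t) by (pose proof (pos_INR m); pose proof (Rabs_pos t); lra).
  pose proof (log_maj m (INR n) ltac:(lra)) as L.
  pose proof (sqrt_maj (INR n) Hx) as S.
  assert (Hp : 0 < (INR n - 1) ^ 2) by (apply pow_lt; lra).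
  set (P := (2 * INR m) ^ m * exp (/ 2)) in *.
  unfold Rdiv. rewrite Rmult_assoc. rewrite (Rmult_assoc _ (8 * P)).
  apply Rmult_le_compat_l; auto.
  apply Rle_trans with (P * sqrt (INR n) * / (INR n - 1) ^ 2).
  - apply Rmult_le_compat_r; [left; apply Rinv_0_lt_compat; auto | lra].
  - assert (0 <= P) by (unfold P; apply Rmult_le_pos; [apply pow_le; pose proof (pos_INR m); lra | left; apply exp_pos]).
    unfold Rdiv in S. nra.
Qed.

Lemma series_maj (a : nat -> R) c M : (1 <= M)%nat -> 0 <= c ->
  (forall k, Rabs (a k) <= c * (vv (k + M) - vv (k + M + 1))) ->
  ex_series a /\ Rabs (Series a) <= c * vv M.
Proof.
  intros HM Hc Ha.
  assert (Hb : is_series (fun k => c * (vv (k + M) - vv (k + M + 1))) (c * vv M)).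
  { apply (is_series_scal_l c (fun k => vv (k + M)%nat - vv (k + M + 1)%nat)). apply tele_series, vv_cv. }
  assert (Eb : ex_series (fun k => c * (vv (k + M) - vv (k + M + 1)))) by (eexists; eauto).
  assert (Ea : ex_series (fun k => Rabs (a k))).
  { apply (ex_series_le (fun k => Rabs (a k)) (fun k => c * (vv (k + M) - vv (k + M + 1)))); auto. intros k.
    change (norm (Rabs (a k))) with (Rabs (Rabs (a k))). rewrite Rabs_Rabsolu. apply Ha. }
  split; [apply ex_series_Rabs; auto|].
  eapply Rle_trans; [apply Series_Rabs; auto|].
  rewrite <- (is_series_unique _ _ Hb). apply Series_le; auto.
  intros k; split; [apply Rabs_pos | apply Ha].
Qed.

Definition tre (m : nat) (sg t : R) (M : nat) : R := Series (fun k => fst (ez m sg t (k + M + 1))).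
Definition tim (m : nat) (sg t : R) (M : nat) : R := Series (fun k => snd (ez m sg t (k + M + 1))).

Lemma tail_ok m sg t M : (1 <= M)%nat -> 1 <= sg -> t <> 0 ->
  (ex_series (fun k => fst (ez m sg t (k + M + 1))) /\
   Rabs (tre m sg t M) <= (INR m + sg + Rabs t) * K8 m * vv M) /\
  (ex_series (fun k => snd (ez m sg t (k + M + 1))) /\
   Rabs (tim m sg t M) <= (INR m + sg + Rabs t) * K8 m * vv M).
Proof.
  intros HM Hs Ht.
  assert (Hc : 0 <= (INR m + sg + Rabs t) * K8 m).
  { apply Rmult_le_pos; [pose proof (pos_INR m); pose proof (Rabs_pos t); lra | apply K8_nonneg]. }
  assert (B : forall k, Rabs (fst (ez m sg t (k + M + 1))) <= (INR m + sg + Rabs t) * K8 m * (vv (k + M) - vv (k + M + 1)) /\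
                        Rabs (snd (ez m sg t (k + M + 1))) <= (INR m + sg + Rabs t) * K8 m * (vv (k + M) - vv (k + M + 1))).
  { intros k. destruct (ez_bound m sg t (k + M + 1) ltac:(lia) Hs Ht) as [B1 B2].
    pose proof (Bd_maj m sg t (k + M + 1) ltac:(lia) Hs) as B3.
    replace (k + M + 1 - 1)%nat with (k + M)%nat in B3 by lia. split; lra. }
  split; apply series_maj; auto; intros k; apply B.
Qed.

Fixpoint csum (a : nat -> C) (N : nat) : C :=
  match N with O => 0%C | S k => (csum a k + a (S k))%C end.

Definition DM (m : nat) (sg t : R) (M : nat) : C :=
  (csum (fun n => fz m sg t (INR n)) M - Gz m sg t (INR M) + (tre m sg t M, tim m sg t M))%C.

Lemma tail_succ m sg t M : (1 <= M)%nat -> 1 <= sg -> t <> 0 ->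
  tre m sg t M = fst (ez m sg t (S M)) + tre m sg t (S M) /\
  tim m sg t M = snd (ez m sg t (S M)) + tim m sg t (S M).
Proof.
  intros HM Hs Ht. destruct (tail_ok m sg t M HM Hs Ht) as [[E1 _] [E2 _]].
  unfold tre, tim. rewrite (Series_incr_1 _ E1), (Series_incr_1 _ E2).
  replace (0 + M + 1)%nat with (S M) by lia.
  split; f_equal; apply Series_ext; intros k; f_equal; f_equal; lia.
Qed.

Lemma DM_succ m sg t M : (1 <= M)%nat -> 1 <= sg -> t <> 0 -> DM m sg t (S M) = DM m sg t M.
Proof.
  intros HM Hs Ht. destruct (tail_succ m sg t M HM Hs Ht) as [T1 T2].
  unfold DM. rewrite T1, T2. cbn [csum]. unfold ez.
  replace (INR (S M) - 1) with (INR M) by (rewrite S_INR; ring).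
  apply injective_projections; simpl; ring.
Qed.

Lemma DM_indep m sg t M : (1 <= M)%nat -> 1 <= sg -> t <> 0 -> DM m sg t M = DM m sg t 1.
Proof.
  intros HM Hs Ht. induction M as [|M IH]; [lia|].
  destruct (Nat.eq_dec M 0) as [->|HM0]; [reflexivity|].
  rewrite DM_succ by (auto; lia). apply IH; lia.
Qed.


Lemma Cmod_cexp w u : Cmod (cexp w u) = exp (fst w * u).
Proof.
  unfold Cmod, cexp; cbn [fst snd].
  replace ((exp (fst w * u) * cos (snd w * u)) ^ 2 + (exp (fst w * u) * sin (snd w * u)) ^ 2)
    with (exp (fst w * u) ^ 2 * (sin (snd w * u) ^ 2 + cos (snd w * u) ^ 2)) by ring.
  rewrite <- !Rsqr_pow2, sin2_cos2, Rmult_1_r, Rsqr_pow2.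
  apply sqrt_pow2. left; apply exp_pos.
Qed.

Lemma Cmod_RtoC r : Cmod (RtoC r) = Rabs r.
Proof. apply Cmod_R. Qed.

Lemma H_bound m w u : 1 <= Cmod w -> 0 <= u ->
  Cmod (Hf m w u) <= exp (fst w * u) * INR (Factorial.fact (S m)) * (1 + u) ^ m / Cmod w.
Proof.
  intros Hw Hu. assert (Hw0 : w <> 0%C) by (intros E; rewrite E, Cmod_0 in Hw; lra).
  assert (Hwp : 0 < Cmod w) by lra.
  set (E := exp (fst w * u)). assert (HE : 0 < E) by apply exp_pos.
  induction m as [|k IH]; cbn [Hf].
  - rewrite Cmod_div, Cmod_cexp by auto. simpl. unfold E. lra.
  - eapply Rle_trans; [apply Cmod_triangle|].
    rewrite Cmod_mult, !Cmod_div, Cmod_mult, !Cmod_RtoC, Cmod_cexp by auto.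
    fold E.
    rewrite Rabs_right with (r := INR (S k)) by (apply Rle_ge, pos_INR).
    rewrite <- RPow_abs, Rabs_Ropp, (Rabs_right u) by lra.
    set (F := INR (Factorial.fact (S k))) in *.
    assert (HF : F = INR (Factorial.fact (S k))) by reflexivity.
    assert (HF1 : 1 <= F) by (unfold F; apply (le_INR 1); apply Factorial.lt_O_fact).
    assert (Hfe : INR (Factorial.fact (S (S k))) = INR (S (S k)) * F) by (unfold F; rewrite <- mult_INR; reflexivity).
    rewrite Hfe. rewrite !S_INR.
    assert (Hup : u ^ S k <= (1 + u) ^ S k) by (apply pow_incr; lra).
    assert (Hup2 : (1 + u) ^ k <= (1 + u) ^ S k) by (simpl; assert (0 <= (1+u)^k) by (apply pow_le; lra); nra).
    assert (Hp : 0 <= (1 + u) ^ k) by (apply pow_le; lra).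
    assert (Hk : 0 <= INR k) by apply pos_INR.
    assert (Hiw : / Cmod w <= 1) by (rewrite <- Rinv_1; apply Rinv_le_contravar; lra).
    assert (Hiw0 : 0 < / Cmod w) by (apply Rinv_0_lt_compat; lra).
    unfold Rdiv in *.
    set (iw := / Cmod w) in *. set (P := (1 + u) ^ k) in *. set (Q := (1 + u) ^ S k) in *.
    assert (Hx : 0 <= Cmod (Hf k w u)) by apply Cmod_ge_0.
    assert (T1 : u ^ S k * E * iw <= E * Q * iw).
    { replace (E * Q * iw) with (Q * (E * iw)) by ring. replace (u ^ S k * E * iw) with (u ^ S k * (E * iw)) by ring.
      apply Rmult_le_compat_r; [apply Rmult_le_pos|]; lra. }
    assert (T2 : (INR k + 1) * iw * Cmod (Hf k w u) <= (INR k + 1) * (E * F * Q * iw)).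
    { rewrite Rmult_assoc. apply Rmult_le_compat_l; [lra|].
      apply Rle_trans with (1 * (E * F * P * iw)).
      - apply prod_le; split; try lra. auto.
      - assert (0 <= E * F) by (apply Rmult_le_pos; lra).
        rewrite Rmult_1_l. apply Rmult_le_compat_r; [lra|]. apply Rmult_le_compat_l; lra. }
    assert (0 <= E * F * Q * iw) by (repeat apply Rmult_le_pos; try lra; unfold Q; apply pow_le; lra).
    nra.
Qed.

Lemma Cmod_ge_snd z : Rabs (snd z) <= Cmod z.
Proof. pose proof (Rmax_Cmod z). pose proof (Rmax_r (Rabs (fst z)) (Rabs (snd z))). lra. Qed.
Lemma Cmod_ge_fst z : Rabs (fst z) <= Cmod z.
Proof. pose proof (Rmax_Cmod z). pose proof (Rmax_l (Rabs (fst z)) (Rabs (snd z))). lra. Qed.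

Lemma Cmod_wof sg t : Rabs t <= Cmod (wof sg t).
Proof. pose proof (Cmod_ge_snd (wof sg t)). unfold wof in H at 1. simpl in H. rewrite Rabs_Ropp in H. auto. Qed.

Definition KG (m : nat) (a : R) : R :=
  exp a * (INR m / (a / 2)) ^ m * INR (Factorial.fact (S m)) * (2 / a).

Lemma G_small m sg t x : 1 < sg -> 1 <= Rabs t -> 1 <= x ->
  Cmod (Gz m sg t x) <= KG m (sg - 1) / (1 + ln x).
Proof.
  intros Hs Ht Hx. unfold Gz.
  pose proof (Cmod_wof sg t) as Hw.
  pose proof (ln_ge0 x Hx) as HL. set (L := ln x) in *.
  eapply Rle_trans; [apply H_bound; lra|].
  set (a := sg - 1). set (z := 1 + L).
  assert (Ha : 0 < a) by (unfold a; lra).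
  assert (Hz : 1 <= z) by (unfold z; lra).
  replace (fst (wof sg t) * L) with (a + (- a * z)) by (unfold a, z, wof; simpl; ring).
  rewrite exp_plus.
  pose proof (zle_pow z (a / 2) m ltac:(lra) ltac:(lra)) as Zp.
  set (F := INR (Factorial.fact (S m))).
  assert (HF : 0 <= F) by apply pos_INR.
  set (P := (INR m / (a / 2)) ^ m).
  assert (HP : 0 <= P) by (unfold P; apply pow_le; apply Rmult_le_pos; [apply pos_INR| left; apply Rinv_0_lt_compat; lra]).
  assert (Hiw : / Cmod (wof sg t) <= 1) by (rewrite <- Rinv_1; apply Rinv_le_contravar; lra).
  assert (Hiw0 : 0 < / Cmod (wof sg t)) by (apply Rinv_0_lt_compat; lra).
  assert (He : exp (- a * z) * exp (a / 2 * z) = exp (- (a / 2 * z))).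
  { rewrite <- exp_plus. f_equal. field. }
  assert (He2 : exp (- (a / 2 * z)) <= 2 / a / z).
  { rewrite exp_Ropp. pose proof (le_exp_self (a / 2 * z)).
    replace (2 / a / z) with (/ (a / 2 * z)) by (field; lra).
    apply Rinv_le_contravar; auto. apply Rmult_lt_0_compat; lra. }
  unfold KG; fold a; fold F; fold P.
  assert (0 < exp a) by apply exp_pos.
  assert (0 < exp (- a * z)) by apply exp_pos.
  apply Rle_trans with (exp a * exp (- a * z) * F * z ^ m).
  { unfold Rdiv. rewrite (Rmult_assoc _ (z ^ m)). apply Rmult_le_compat_l.
    - repeat apply Rmult_le_pos; lra.
    - assert (0 <= z ^ m) by (apply pow_le; lra). nra. }
  apply Rle_trans with (exp a * F * P * (exp (- a * z) * exp (a / 2 * z))).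
  { replace (exp a * exp (- a * z) * F * z ^ m) with ((exp a * F * exp (- a * z)) * z ^ m) by ring.
    replace (exp a * F * P * (exp (- a * z) * exp (a / 2 * z))) with ((exp a * F * exp (- a * z)) * (P * exp (a / 2 * z))) by ring.
    apply Rmult_le_compat_l; [repeat apply Rmult_le_pos; lra | exact Zp]. }
  rewrite He.
  replace (exp a * P * F * (2 / a) / z) with (exp a * F * P * (2 / a / z)) by (field; lra).
  apply Rmult_le_compat_l; [repeat apply Rmult_le_pos; lra | exact He2].
Qed.

Lemma dir_partial m sg t N :
  sum_f_R0 (fun n => zterm_re m sg t (S n)) N = fst (csum (fun n => fz m sg t (INR n)) (S N)) /\
  sum_f_R0 (fun n => zterm_im m sg t (S n)) N = snd (csum (fun n => fz m sg t (INR n)) (S N)).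
Proof.
  induction N as [|N [IH1 IH2]].
  - simpl. unfold zterm_re, zterm_im. simpl INR. split; ring.
  - change (sum_f_R0 ?f (S N)) with (sum_f_R0 f N + f (S N)).
    rewrite IH1, IH2. cbn [csum]. simpl fst. simpl snd. split; reflexivity.
Qed.

Lemma csum_DM m sg t N : (1 <= N)%nat -> 1 <= sg -> t <> 0 ->
  csum (fun n => fz m sg t (INR n)) N =
  (DM m sg t 1 + Gz m sg t (INR N) - (tre m sg t N, tim m sg t N))%C.
Proof.
  intros HN Hs Ht. rewrite <- (DM_indep m sg t N) by auto. unfold DM.
  apply injective_projections; simpl; ring.
Qed.

Lemma cv_two (u : nat -> R) L A B : 0 <= A -> 0 <= B ->
  (forall N, Rabs (u N - L) <= A / (1 + ln (INR (S N))) + B * vv (S N)) -> Un_cv u L.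
Proof.
  intros HA HB Hu eps He.
  destruct (vv_cv (eps / 2 / (B + 1))) as [N1 HN1].
  { apply Rdiv_lt_0_compat; lra. }
  destruct (INR_unbounded (exp (2 * A / eps))) as [N2 HN2].
  exists (N1 + N2)%nat. intros n Hn. unfold R_dist.
  eapply Rle_lt_trans; [apply Hu|].
  assert (T1 : A / (1 + ln (INR (S n))) < eps / 2 + 0 \/ A = 0).
  { destruct (Req_dec A 0) as [->|HA0]; [right; auto|left].
    assert (Hn2 : INR N2 <= INR (S n)) by (apply le_INR; lia).
    assert (0 < exp (2 * A / eps)) by apply exp_pos.
    assert (ln (exp (2 * A / eps)) < ln (INR (S n))) by (apply ln_increasing; lra).
    rewrite ln_exp in H0.
    assert (0 < 2 * A / eps) by (apply Rdiv_lt_0_compat; lra).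
    apply Rmult_lt_reg_r with (r := 1 + ln (INR (S n))); [lra|].
    unfold Rdiv. rewrite Rmult_assoc, Rinv_l by lra.
    assert (eps * / 2 * (2 * A / eps) < eps * / 2 * ln (INR (S n))) by (apply Rmult_lt_compat_l; lra).
    replace (eps * / 2 * (2 * A / eps)) with A in H2 by (field; lra). lra. }
  assert (T2 : B * vv (S n) < eps / 2).
  { specialize (HN1 (S n) ltac:(lia)). unfold R_dist in HN1. rewrite Rminus_0_r in HN1.
    assert (0 < vv (S n)).
    { unfold vv. apply Rinv_0_lt_compat, sqrt_lt_R0. apply lt_0_INR; lia. }
    rewrite Rabs_right in HN1 by lra.
    apply Rle_lt_trans with ((B + 1) * vv (S n)); [nra|].
    apply Rmult_lt_reg_l with (r := / (B + 1)); [apply Rinv_0_lt_compat; lra|].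
    rewrite <- Rmult_assoc, Rinv_l, Rmult_1_l by lra.
    replace (/ (B + 1) * (eps / 2)) with (eps / 2 / (B + 1)) by (field; lra). auto. }
  destruct T1 as [T1|T1]; [lra|]. subst A. unfold Rdiv. rewrite Rmult_0_l. lra.
Qed.

Lemma KG_nonneg m a : 0 < a -> 0 <= KG m a.
Proof.
  intros Ha. unfold KG. apply Rmult_le_pos; [|left; apply Rdiv_lt_0_compat; lra].
  apply Rmult_le_pos; [apply Rmult_le_pos|].
  - left; apply exp_pos.
  - apply pow_le. apply Rmult_le_pos; [apply pos_INR | left; apply Rinv_0_lt_compat; lra].
  - apply pos_INR.
Qed.

Lemma choose_R_spec (P : R -> Prop) l : P l -> (forall l', P l' -> l' = l) -> choose_R P = l.
Proof.
  intros Hl Hu. unfold choose_R. apply Hu. apply epsilon_spec. exists l; auto.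
Qed.

Lemma fst_pm (a b c : C) : fst (a + b - c)%C = fst a + fst b - fst c.
Proof. reflexivity. Qed.
Lemma snd_pm (a b c : C) : snd (a + b - c)%C = snd a + snd b - snd c.
Proof. reflexivity. Qed.

Lemma dir_eq m sg t : 1 < sg -> 1 <= Rabs t ->
  dir_re m sg t = fst (DM m sg t 1) /\ dir_im m sg t = snd (DM m sg t 1).
Proof.
  intros Hs Ht. assert (Ht0 : t <> 0) by (intros ->; rewrite Rabs_R0 in Ht; lra).
  set (c := (INR m + sg + Rabs t) * K8 m).
  assert (Hc : 0 <= c).
  { apply Rmult_le_pos; [pose proof (pos_INR m); pose proof (Rabs_pos t); lra | apply K8_nonneg]. }
  assert (Bnd : forall N, Rabs (fst (Gz m sg t (INR (S N))) - tre m sg t (S N)) <= KG m (sg - 1) / (1 + ln (INR (S N))) + c * vv (S N) /\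
                          Rabs (snd (Gz m sg t (INR (S N))) - tim m sg t (S N)) <= KG m (sg - 1) / (1 + ln (INR (S N))) + c * vv (S N)).
  { intros N. assert (HN : 1 <= INR (S N)) by (apply (le_INR 1); lia).
    pose proof (G_small m sg t (INR (S N)) Hs Ht HN) as G.
    destruct (tail_ok m sg t (S N) ltac:(lia) ltac:(lra) Ht0) as [[_ T1] [_ T2]]. fold c in T1, T2.
    pose proof (Cmod_ge_fst (Gz m sg t (INR (S N)))). pose proof (Cmod_ge_snd (Gz m sg t (INR (S N)))).
    split; (eapply Rle_trans; [apply Rabs_triang|]); rewrite Rabs_Ropp; lra. }
  split; apply choose_R_spec.
  - apply (cv_two _ _ (KG m (sg - 1)) c); auto. { apply KG_nonneg; lra. }
    intros N. destruct (dir_partial m sg t N) as [E _]. rewrite E.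
    rewrite csum_DM by (auto; lia || lra). rewrite fst_pm. simpl (fst (_, _)).
    replace (fst (DM m sg t 1) + fst (Gz m sg t (INR (S N))) - tre m sg t (S N) - fst (DM m sg t 1))
      with (fst (Gz m sg t (INR (S N))) - tre m sg t (S N)) by ring. apply Bnd.
  - intros l' Hl'. eapply uniqueness_sum; eauto.
    apply (cv_two _ _ (KG m (sg - 1)) c); auto. { apply KG_nonneg; lra. }
    intros N. destruct (dir_partial m sg t N) as [E _]. rewrite E.
    rewrite csum_DM by (auto; lia || lra). rewrite fst_pm. simpl (fst (_, _)).
    replace (fst (DM m sg t 1) + fst (Gz m sg t (INR (S N))) - tre m sg t (S N) - fst (DM m sg t 1))
      with (fst (Gz m sg t (INR (S N))) - tre m sg t (S N)) by ring. apply Bnd.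
  - apply (cv_two _ _ (KG m (sg - 1)) c); auto. { apply KG_nonneg; lra. }
    intros N. destruct (dir_partial m sg t N) as [_ E]. rewrite E.
    rewrite csum_DM by (auto; lia || lra). rewrite snd_pm. simpl (snd (_, _)).
    replace (snd (DM m sg t 1) + snd (Gz m sg t (INR (S N))) - tim m sg t (S N) - snd (DM m sg t 1))
      with (snd (Gz m sg t (INR (S N))) - tim m sg t (S N)) by ring. apply Bnd.
  - intros l' Hl'. eapply uniqueness_sum; eauto.
    apply (cv_two _ _ (KG m (sg - 1)) c); auto. { apply KG_nonneg; lra. }
    intros N. destruct (dir_partial m sg t N) as [_ E]. rewrite E.
    rewrite csum_DM by (auto; lia || lra). rewrite snd_pm. simpl (snd (_, _)).
    replace (snd (DM m sg t 1) + snd (Gz m sg t (INR (S N))) - tim m sg t (S N) - snd (DM m sg t 1))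
      with (snd (Gz m sg t (INR (S N))) - tim m sg t (S N)) by ring. apply Bnd.
Qed.


Lemma c_plus f g x : continuity_pt f x -> continuity_pt g x -> continuity_pt (fun y => f y + g y) x.
Proof. intros H1 H2. exact (continuity_pt_plus f g x H1 H2). Qed.
Lemma c_minus f g x : continuity_pt f x -> continuity_pt g x -> continuity_pt (fun y => f y - g y) x.
Proof. intros H1 H2. exact (continuity_pt_minus f g x H1 H2). Qed.
Lemma c_mult f g x : continuity_pt f x -> continuity_pt g x -> continuity_pt (fun y => f y * g y) x.
Proof. intros H1 H2. exact (continuity_pt_mult f g x H1 H2). Qed.
Lemma c_opp f x : continuity_pt f x -> continuity_pt (fun y => - f y) x.
Proof. intros H1. exact (continuity_pt_opp f x H1). Qed.
Lemma c_const c x : continuity_pt (fun _ => c) x.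
Proof. apply continuity_pt_const. intros a b; reflexivity. Qed.
Lemma c_id x : continuity_pt (fun y => y) x.
Proof. apply derivable_continuous_pt, derivable_pt_id. Qed.
Lemma c_comp (f g : R -> R) x : continuity_pt g x -> continuity_pt f (g x) -> continuity_pt (fun y => f (g y)) x.
Proof. intros H1 H2. exact (continuity_pt_comp g f x H1 H2). Qed.
Lemma c_inv f x : continuity_pt f x -> f x <> 0 -> continuity_pt (fun y => / f y) x.
Proof. intros H1 H2. exact (continuity_pt_inv f x H1 H2). Qed.
Lemma c_exp x : continuity_pt exp x.
Proof. apply derivable_continuous_pt, derivable_pt_exp. Qed.
Lemma c_cos x : continuity_pt cos x.
Proof. apply derivable_continuous_pt, derivable_pt_cos. Qed.
Lemma c_sin x : continuity_pt sin x.
Proof. apply derivable_continuous_pt, derivable_pt_sin. Qed.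
Lemma c_pow f x n : continuity_pt f x -> continuity_pt (fun y => f y ^ n) x.
Proof. intros H1. apply (c_comp (fun z => z ^ n) f); auto.
  apply derivable_continuous_pt, derivable_pt_pow. Qed.

Definition ccont (F : R -> C) (x : R) : Prop :=
  continuity_pt (fun p => fst (F p)) x /\ continuity_pt (fun p => snd (F p)) x.

Lemma cc_plus F G x : ccont F x -> ccont G x -> ccont (fun p => (F p + G p)%C) x.
Proof. intros [A1 A2] [B1 B2]; split; simpl; apply c_plus; auto. Qed.
Lemma cc_minus F G x : ccont F x -> ccont G x -> ccont (fun p => (F p - G p)%C) x.
Proof. intros [A1 A2] [B1 B2]; split; simpl; apply c_plus; auto; apply c_opp; auto. Qed.
Lemma cc_mult F G x : ccont F x -> ccont G x -> ccont (fun p => (F p * G p)%C) x.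
Proof. intros [A1 A2] [B1 B2]; split; simpl.
  - apply c_minus; apply c_mult; auto.
  - apply c_plus; apply c_mult; auto. Qed.
Lemma cc_const (c : C) x : ccont (fun _ => c) x.
Proof. split; apply c_const. Qed.
Lemma cc_R (r : R -> R) x : continuity_pt r x -> ccont (fun p => RtoC (r p)) x.
Proof. intros; split; simpl; auto; apply c_const. Qed.
Lemma cc_pair (a b : R -> R) x : continuity_pt a x -> continuity_pt b x -> ccont (fun p => (a p, b p)) x.
Proof. intros; split; simpl; auto. Qed.

Lemma cc_inv F x : ccont F x -> F x <> 0%C -> ccont (fun p => (/ F p)%C) x.
Proof.
  intros [A1 A2] Hn.
  assert (Hd : fst (F x) ^ 2 + snd (F x) ^ 2 <> 0).
  { intros E. apply Hn. assert (fst (F x) = 0 /\ snd (F x) = 0) as [E1 E2] by (split; nra).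
    apply injective_projections; simpl; auto. }
  assert (Cd : continuity_pt (fun p => / (fst (F p) ^ 2 + snd (F p) ^ 2)) x).
  { apply c_inv; auto. apply c_plus; apply c_pow; auto. }
  split; unfold Cinv; simpl.
  - apply (c_mult (fun p => fst (F p))); auto.
  - apply (c_mult (fun p => - snd (F p))); auto. apply c_opp; auto.
Qed.

Lemma cc_cexp (W : R -> C) u x : ccont W x -> ccont (fun p => cexp (W p) u) x.
Proof.
  intros [A1 A2]. unfold cexp. apply cc_pair; apply c_mult.
  all: try (apply (c_comp exp (fun p => fst (W p) * u)); [apply c_mult; auto; apply c_const | apply c_exp]).
  - apply (c_comp cos (fun p => snd (W p) * u)); [apply c_mult; auto; apply c_const | apply c_cos].
  - apply (c_comp sin (fun p => snd (W p) * u)); [apply c_mult; auto; apply c_const | apply c_sin].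
Qed.

Lemma cc_H m (W : R -> C) u x : ccont W x -> W x <> 0%C -> ccont (fun p => Hf m (W p) u) x.
Proof.
  intros HW Hn. assert (Hi : ccont (fun p => (/ W p)%C) x) by (apply cc_inv; auto).
  induction m as [|k IH]; cbn [Hf]; unfold Cdiv.
  - apply cc_mult; auto. apply cc_cexp; auto.
  - apply cc_plus; apply cc_mult; auto.
    + apply cc_mult; [apply cc_const | apply cc_cexp; auto].
    + apply cc_mult; [apply cc_const | auto].
Qed.

Lemma cc_csum (F : nat -> R -> C) N x : (forall n, ccont (F n) x) -> ccont (fun p => csum (fun n => F n p) N) x.
Proof.
  intros HF. induction N as [|N IH]; cbn [csum].
  - apply cc_const.
  - apply cc_plus; auto.
Qed.

Lemma cont_eps (A : R -> R) x0 : continuity_pt A x0 ->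
  forall eps, 0 < eps -> exists d, 0 < d /\ forall x, Rabs (x - x0) < d -> Rabs (A x - A x0) < eps.
Proof.
  intros HA eps He. unfold continuity_pt, continue_in, limit1_in, limit_in in HA.
  destruct (HA eps He) as [d [Hd Hx]]. exists d; split; auto. intros x Hxd.
  destruct (Req_dec x x0) as [->|Hne].
  - rewrite Rminus_diag, Rabs_R0; auto.
  - apply (Hx x). split; [split; [constructor | auto] | auto].
Qed.


Lemma abs3 a b c : Rabs (a + b - c) <= Rabs a + Rabs b + Rabs c.
Proof.
  unfold Rminus. eapply Rle_trans; [apply Rabs_triang|]. rewrite Rabs_Ropp.
  pose proof (Rabs_triang a b). lra.
Qed.

Lemma approx_core (F : R -> R) (D : R -> Prop) x0 : D x0 ->
  (forall eps, 0 < eps -> exists A : R -> R, continuity_pt A x0 /\ forall x, D x -> Rabs (F x - A x) <= eps) ->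
  forall eps, 0 < eps -> exists d, 0 < d /\ forall x, D x -> Rabs (x - x0) < d -> Rabs (F x - F x0) < eps.
Proof.
  intros HD Hap eps He.
  destruct (Hap (eps / 3) ltac:(lra)) as [A [HA HFA]].
  destruct (cont_eps A x0 HA (eps / 3) ltac:(lra)) as [d [Hd Hdx]].
  exists d; split; auto. intros x Hx Hxd.
  pose proof (HFA x Hx). pose proof (HFA x0 HD). pose proof (Hdx x Hxd).
  replace (F x - F x0) with ((F x - A x) + (A x - A x0) - (F x0 - A x0)) by ring.
  eapply Rle_lt_trans; [apply abs3|]. lra.
Qed.

Lemma approx_cont (F : R -> R) x0 r : 0 < r ->
  (forall eps, 0 < eps -> exists A : R -> R, continuity_pt A x0 /\ forall x, Rabs (x - x0) < r -> Rabs (F x - A x) <= eps) ->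
  continuity_pt F x0.
Proof.
  intros Hr Hap. pose proof (approx_core F (fun x => Rabs (x - x0) < r) x0) as K.
  unfold continuity_pt, continue_in, limit1_in, limit_in. intros eps He.
  assert (H0 : Rabs (x0 - x0) < r) by (rewrite Rminus_diag, Rabs_R0; auto).
  destruct (K H0 Hap eps He) as [d [Hd Hx]].
  exists (Rmin d r). split; [apply Rmin_pos; auto|].
  intros x [_ Hxd]. simpl in Hxd. unfold R_dist in *. simpl. unfold R_dist. apply Hx.
  - pose proof (Rmin_r d r); lra.
  - pose proof (Rmin_l d r); lra.
Qed.


Definition AM (m : nat) (sg t : R) (M : nat) : C :=
  (csum (fun n => fz m sg t (INR n)) M - Gz m sg t (INR M))%C.

Lemma DM_split m sg t M : DM m sg t M = (AM m sg t M + (tre m sg t M, tim m sg t M))%C.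
Proof. reflexivity. Qed.

Lemma fst_DM m sg t M : fst (DM m sg t M) = fst (AM m sg t M) + tre m sg t M.
Proof. reflexivity. Qed.
Lemma snd_DM m sg t M : snd (DM m sg t M) = snd (AM m sg t M) + tim m sg t M.
Proof. reflexivity. Qed.

Lemma c_Rpower_s n x : continuity_pt (fun s => Rpower n (- s)) x.
Proof. unfold Rpower. apply (c_comp exp (fun s => - s * ln n)); [|apply c_exp].
  apply c_mult; [apply c_opp, c_id | apply c_const]. Qed.

Lemma AM_cont_sg m t M x : t <> 0 -> ccont (fun s => AM m s t M) x.
Proof.
  intros Ht. unfold AM. apply cc_minus.
  - apply (cc_csum (fun n s => fz m s t (INR n))). intros n. unfold fz. apply cc_pair.
    + apply c_mult; [apply c_mult; [apply c_const | apply c_Rpower_s] | apply c_const].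
    + apply c_opp. apply c_mult; [apply c_mult; [apply c_const | apply c_Rpower_s] | apply c_const].
  - unfold Gz. apply (cc_H m (fun s => wof s t)).
    + unfold wof. apply cc_pair; [apply c_minus; [apply c_const | apply c_id] | apply c_const].
    + unfold wof. intros E. injection E; intros; lra.
Qed.

Lemma AM_cont_t m sg M x : x <> 0 -> ccont (fun t => AM m sg t M) x.
Proof.
  intros Hx. unfold AM. apply cc_minus.
  - apply (cc_csum (fun n t => fz m sg t (INR n))). intros n. unfold fz. apply cc_pair.
    + apply c_mult; [apply c_const|]. apply (c_comp cos (fun t => t * ln (INR n))); [|apply c_cos].
      apply c_mult; [apply c_id | apply c_const].
    + apply c_opp. apply c_mult; [apply c_const|]. apply (c_comp sin (fun t => t * ln (INR n))); [|apply c_sin].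
      apply c_mult; [apply c_id | apply c_const].
  - unfold Gz. apply (cc_H m (fun t => wof sg t)).
    + unfold wof. apply cc_pair; [apply c_const | apply c_opp, c_id].
    + unfold wof. intros E. injection E; intros; lra.
Qed.

Lemma pick_M c eps : 0 <= c -> 0 < eps -> exists M, (1 <= M)%nat /\ c * vv M <= eps.
Proof.
  intros Hc He. destruct (vv_cv (eps / (c + 1)) ltac:(apply Rdiv_lt_0_compat; lra)) as [N HN].
  exists (S N). split; [lia|]. specialize (HN (S N) ltac:(lia)). unfold R_dist in HN.
  rewrite Rminus_0_r in HN.
  assert (0 < vv (S N)) by (unfold vv; apply Rinv_0_lt_compat, sqrt_lt_R0, lt_0_INR; lia).
  rewrite Rabs_right in HN by lra.
  apply Rle_trans with ((c + 1) * vv (S N)); [nra|].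
  apply Rmult_le_reg_l with (/ (c + 1)); [apply Rinv_0_lt_compat; lra|].
  rewrite <- Rmult_assoc, Rinv_l, Rmult_1_l by lra.
  replace (/ (c + 1) * eps) with (eps / (c + 1)) by (unfold Rdiv; ring). lra.
Qed.

Lemma right_lim_unique f l1 l2 : right_lim_at_1 f l1 -> right_lim_at_1 f l2 -> l1 = l2.
Proof.
  intros H1 H2. apply Rminus_diag_uniq. destruct (Req_dec (l1 - l2) 0) as [E|E]; auto.
  exfalso. set (e := Rabs (l1 - l2) / 2). assert (He : 0 < e) by (unfold e; pose proof (Rabs_pos_lt _ E); lra).
  destruct (H1 e He) as [d1 [Hd1 K1]]. destruct (H2 e He) as [d2 [Hd2 K2]].
  set (s := 1 + Rmin d1 d2 / 2).
  assert (0 < Rmin d1 d2) by (apply Rmin_pos; auto).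
  assert (Rmin d1 d2 <= d1) by apply Rmin_l. assert (Rmin d1 d2 <= d2) by apply Rmin_r.
  specialize (K1 s ltac:(unfold s; lra)). specialize (K2 s ltac:(unfold s; lra)).
  assert (Rabs (l1 - l2) <= Rabs (f s - l2) + Rabs (f s - l1)).
  { replace (l1 - l2) with ((f s - l2) - (f s - l1)) by ring.
    eapply Rle_trans; [apply Rabs_triang|]. rewrite Rabs_Ropp. lra. }
  unfold e in *. lra.
Qed.

Lemma line_lim m t : 1 <= t ->
  right_lim_at_1 (fun s => dir_re m s t) (fst (DM m 1 t 1)) /\
  right_lim_at_1 (fun s => dir_im m s t) (snd (DM m 1 t 1)).
Proof.
  intros Ht. assert (Ht0 : t <> 0) by lra. assert (Hat : 1 <= Rabs t) by (rewrite Rabs_right; lra).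
  set (c := (INR m + 2 + Rabs t) * K8 m).
  assert (Hc : 0 <= c) by (apply Rmult_le_pos; [pose proof (pos_INR m); pose proof (Rabs_pos t); lra | apply K8_nonneg]).
  assert (TB : forall M s, (1 <= M)%nat -> 1 <= s <= 2 ->
            Rabs (tre m s t M) <= c * vv M /\ Rabs (tim m s t M) <= c * vv M).
  { intros M s HM Hs. destruct (tail_ok m s t M HM ltac:(lra) Ht0) as [[_ T1] [_ T2]].
    assert (0 <= vv M) by (unfold vv; left; apply Rinv_0_lt_compat, sqrt_lt_R0, lt_0_INR; lia).
    assert ((INR m + s + Rabs t) * K8 m * vv M <= c * vv M).
    { apply Rmult_le_compat_r; auto. apply Rmult_le_compat_r; [apply K8_nonneg | lra]. }
    split; lra. }
  assert (Ap : forall eps, 0 < eps -> exists M, (1 <= M)%nat /\ c * vv M <= eps) by (intros; apply pick_M; auto).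
  split; intros eps He.
  - destruct (approx_core (fun s => fst (DM m s t 1)) (fun s => 1 <= s <= 2) 1 ltac:(lra)) with (eps := eps) as [d [Hd K]]; auto.
    + intros e He'. destruct (Ap e He') as [M [HM HcM]].
      exists (fun s => fst (AM m s t M)). split; [apply (AM_cont_sg m t M 1 Ht0)|].
      intros s Hs. rewrite <- (DM_indep m s t M) by (auto; lra). rewrite fst_DM.
      replace (fst (AM m s t M) + tre m s t M - fst (AM m s t M)) with (tre m s t M) by ring.
      destruct (TB M s HM Hs); lra.
    + exists (Rmin d 1). split; [apply Rmin_pos; lra|]. intros s Hs.
      pose proof (Rmin_l d 1). pose proof (Rmin_r d 1).
      rewrite (proj1 (dir_eq m s t ltac:(lra) Hat)). apply K; [lra|]. rewrite Rabs_right; lra.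
  - destruct (approx_core (fun s => snd (DM m s t 1)) (fun s => 1 <= s <= 2) 1 ltac:(lra)) with (eps := eps) as [d [Hd K]]; auto.
    + intros e He'. destruct (Ap e He') as [M [HM HcM]].
      exists (fun s => snd (AM m s t M)). split; [apply (AM_cont_sg m t M 1 Ht0)|].
      intros s Hs. rewrite <- (DM_indep m s t M) by (auto; lra). rewrite snd_DM.
      replace (snd (AM m s t M) + tim m s t M - snd (AM m s t M)) with (tim m s t M) by ring.
      destruct (TB M s HM Hs); lra.
    + exists (Rmin d 1). split; [apply Rmin_pos; lra|]. intros s Hs.
      pose proof (Rmin_l d 1). pose proof (Rmin_r d 1).
      rewrite (proj2 (dir_eq m s t ltac:(lra) Hat)). apply K; [lra|]. rewrite Rabs_right; lra.
Qed.

Lemma zeta_line_eq m t : 1 <= t ->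
  zeta_line_re m t = fst (DM m 1 t 1) /\ zeta_line_im m t = snd (DM m 1 t 1).
Proof.
  intros Ht. destruct (line_lim m t Ht) as [L1 L2]. split.
  - unfold zeta_line_re. apply choose_R_spec; auto. intros l' Hl'. eapply right_lim_unique; eauto.
  - unfold zeta_line_im. apply choose_R_spec; auto. intros l' Hl'. eapply right_lim_unique; eauto.
Qed.

Lemma line_cont m x0 : 2 <= x0 ->
  continuity_pt (zeta_line_re m) x0 /\ continuity_pt (zeta_line_im m) x0.
Proof.
  intros Hx0.
  set (c := (INR m + 2 + x0) * K8 m).
  assert (Hc : 0 <= c) by (apply Rmult_le_pos; [pose proof (pos_INR m); lra | apply K8_nonneg]).
  assert (TB : forall M x, (1 <= M)%nat -> Rabs (x - x0) < 1 ->
            Rabs (tre m 1 x M) <= c * vv M /\ Rabs (tim m 1 x M) <= c * vv M).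
  { intros M x HM Hx. apply Rabs_def2 in Hx.
    destruct (tail_ok m 1 x M HM ltac:(lra) ltac:(lra)) as [[_ T1] [_ T2]].
    assert (0 <= vv M) by (unfold vv; left; apply Rinv_0_lt_compat, sqrt_lt_R0, lt_0_INR; lia).
    assert ((INR m + 1 + Rabs x) * K8 m * vv M <= c * vv M).
    { apply Rmult_le_compat_r; auto. apply Rmult_le_compat_r; [apply K8_nonneg|].
      rewrite Rabs_right; lra. }
    split; lra. }
  split; apply (approx_cont _ x0 1); try lra; intros e He;
    destruct (pick_M c e Hc He) as [M [HM HcM]].
  - exists (fun x => fst (AM m 1 x M)). split; [apply (AM_cont_t m 1 M x0); lra|].
    intros x Hx. pose proof Hx as Hx'. apply Rabs_def2 in Hx'.
    rewrite (proj1 (zeta_line_eq m x ltac:(lra))).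
    rewrite <- (DM_indep m 1 x M) by (auto; lra). rewrite fst_DM.
    replace (fst (AM m 1 x M) + tre m 1 x M - fst (AM m 1 x M)) with (tre m 1 x M) by ring.
    destruct (TB M x HM Hx); lra.
  - exists (fun x => snd (AM m 1 x M)). split; [apply (AM_cont_t m 1 M x0); lra|].
    intros x Hx. pose proof Hx as Hx'. apply Rabs_def2 in Hx'.
    rewrite (proj2 (zeta_line_eq m x ltac:(lra))).
    rewrite <- (DM_indep m 1 x M) by (auto; lra). rewrite snd_DM.
    replace (snd (AM m 1 x M) + tim m 1 x M - snd (AM m 1 x M)) with (tim m 1 x M) by ring.
    destruct (TB M x HM Hx); lra.
Qed.

Lemma zabs_cont m x0 k : 2 <= x0 -> continuity_pt (fun t => zeta_abs m t ^ k) x0.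
Proof.
  intros Hx0. destruct (line_cont m x0 Hx0) as [C1 C2].
  apply c_pow. unfold zeta_abs.
  apply (c_comp sqrt (fun t => zeta_line_re m t ^ 2 + zeta_line_im m t ^ 2)).
  - apply c_plus; apply c_pow; auto.
  - apply continuity_pt_sqrt. pose proof (pow2_ge_0 (zeta_line_re m x0)). pose proof (pow2_ge_0 (zeta_line_im m x0)). lra.
Qed.

Lemma zabs_Cmod m t : 1 <= t -> zeta_abs m t = Cmod (DM m 1 t 1).
Proof.
  intros Ht. unfold zeta_abs, Cmod. destruct (zeta_line_eq m t Ht) as [E1 E2]. rewrite E1, E2. reflexivity.
Qed.


Fixpoint rsum (a : nat -> R) (N : nat) : R :=
  match N with O => 0 | S k => rsum a k + a (S k) end.

Lemma rsum_le (a b : nat -> R) N : (forall n, (1 <= n <= N)%nat -> a n <= b n) -> rsum a N <= rsum b N.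
Proof.
  induction N as [|N IH]; intros Hab; simpl; [lra|].
  apply Rplus_le_compat; [apply IH; intros; apply Hab; lia | apply Hab; lia].
Qed.

Lemma rsum_scal (a : nat -> R) c N : rsum (fun n => c * a n) N = c * rsum a N.
Proof. induction N as [|N IH]; simpl; [ring|]. rewrite IH; ring. Qed.

Lemma csum_diff (a b : nat -> C) N : Cmod (csum a N - csum b N)%C <= rsum (fun n => Cmod (a n - b n)%C) N.
Proof.
  induction N as [|N IH]; cbn [csum rsum].
  - unfold Cminus. rewrite Cplus_opp_r, Cmod_0; lra.
  - replace (csum a N + a (S N) - (csum b N + b (S N)))%C with ((csum a N - csum b N) + (a (S N) - b (S N)))%C by ring.
    eapply Rle_trans; [apply Cmod_triangle|]. lra.
Qed.

Lemma ln_le_sub1 x : 0 < x -> ln x <= x - 1.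
Proof.
  intros Hx. pose proof (le_exp_1 (x - 1)).
  rewrite <- (ln_exp (x - 1)). apply ln_le; auto. lra.
Qed.

Lemma harm M : (1 <= M)%nat -> rsum (fun n => / INR n) M <= 1 + ln (INR M).
Proof.
  induction M as [|M IH]; intros HM; [lia|].
  destruct (Nat.eq_dec M 0) as [->|HM0].
  - simpl. rewrite ln_1. lra.
  - cbn [rsum]. specialize (IH ltac:(lia)).
    assert (HM1 : 1 <= INR M) by (apply (le_INR 1); lia).
    rewrite S_INR.
    assert (ln (INR M / (INR M + 1)) <= INR M / (INR M + 1) - 1) by (apply ln_le_sub1; apply Rdiv_lt_0_compat; lra).
    unfold Rdiv in H. rewrite ln_mult, ln_Rinv in H by (try apply Rinv_0_lt_compat; lra).
    replace (INR M * / (INR M + 1) - 1) with (- / (INR M + 1)) in H by (field; lra).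
    lra.
Qed.

Lemma Cmod_le_sum z : Cmod z <= Rabs (fst z) + Rabs (snd z).
Proof.
  unfold Cmod. rewrite <- (sqrt_pow2 (Rabs (fst z) + Rabs (snd z))) by (pose proof (Rabs_pos (fst z)); pose proof (Rabs_pos (snd z)); lra).
  apply sqrt_le_1_alt.
  pose proof (Rabs_pos (fst z)); pose proof (Rabs_pos (snd z)).
  rewrite <- (pow2_abs (fst z)), <- (pow2_abs (snd z)). nra.
Qed.

Lemma trig_lip (h h' : R -> R) a b : (forall y, is_derive h y (h' y)) -> (forall y, Rabs (h' y) <= 1) ->
  Rabs (h a - h b) <= Rabs (a - b).
Proof.
  intros Hd Hb. destruct (Rle_or_lt a b) as [Hab|Hab].
  - rewrite <- Rabs_Ropp, Ropp_minus_distr, (Rabs_left1 (a - b)) by lra.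
    eapply Rle_trans; [apply (mvt_bound h h' a b 1); auto|]. lra.
  - rewrite (Rabs_right (a - b)) by lra.
    eapply Rle_trans; [apply (mvt_bound h h' b a 1); auto; lra|]. lra.
Qed.

Lemma cos_lip a b : Rabs (cos a - cos b) <= Rabs (a - b).
Proof. apply (trig_lip cos (fun y => - sin y)); intros; [apply d_cos | rewrite Rabs_Ropp; apply abs_sin_le]. Qed.
Lemma sin_lip a b : Rabs (sin a - sin b) <= Rabs (a - b).
Proof. apply (trig_lip sin cos); intros; [apply d_sin | apply abs_cos_le]. Qed.

Lemma choose_M T : 0 <= T -> exists M : nat, (1 <= M)%nat /\ T * T <= INR M <= T * T + 1.
Proof.
  intros HT. destruct (archimed (T * T)) as [A1 A2].
  assert (Hz : (0 < up (T * T))%Z) by (apply lt_0_IZR; nra).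
  exists (Z.to_nat (up (T * T))).
  rewrite INR_IZR_INZ, Z2Nat.id by lia. split; [lia|]. lra.
Qed.

Lemma Rpower_m1 x : 0 < x -> Rpower x (Ropp 1) = / x.
Proof. intros; rewrite Rpower_Ropp, Rpower_1; auto. Qed.

Lemma term_diff m u T n : (1 <= n)%nat ->
  Cmod (fz m 1 u (INR n) - fz m 1 T (INR n))%C <= 2 * Rabs (u - T) * ln (INR n) ^ (S m) * / INR n.
Proof.
  intros Hn. assert (Hn1 : 1 <= INR n) by (apply (le_INR 1); auto).
  pose proof (ln_ge0 _ Hn1) as HL.
  eapply Rle_trans; [apply Cmod_le_sum|]. unfold fz. simpl fst. simpl snd.
  rewrite Rpower_m1 by lra. set (L := ln (INR n)) in *.
  set (A := (- L) ^ m * / INR n).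
  replace (A * cos (u * L) + - (A * cos (T * L))) with (A * (cos (u * L) - cos (T * L))) by ring.
  replace (- (A * sin (u * L)) + - - (A * sin (T * L))) with (- (A * (sin (u * L) - sin (T * L)))) by ring.
  rewrite Rabs_Ropp, !Rabs_mult.
  assert (EA : Rabs A = L ^ m * / INR n).
  { unfold A. rewrite Rabs_mult, <- RPow_abs, Rabs_Ropp, (Rabs_right L), (Rabs_right (/ INR n)); auto.
    apply Rle_ge; left; apply Rinv_0_lt_compat; lra. lra. }
  rewrite EA.
  pose proof (cos_lip (u * L) (T * L)). pose proof (sin_lip (u * L) (T * L)).
  replace (u * L - T * L) with ((u - T) * L) in * by ring.
  rewrite Rabs_mult, (Rabs_right L) in * by lra.
  assert (0 <= L ^ m * / INR n) by (apply Rmult_le_pos; [apply pow_le; lra | left; apply Rinv_0_lt_compat; lra]).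
  simpl pow.
  replace (2 * Rabs (u - T) * (L * L ^ m) * / INR n) with ((L ^ m * / INR n) * (Rabs (u - T) * L + Rabs (u - T) * L)) by ring.
  rewrite <- Rmult_plus_distr_l. apply Rmult_le_compat_l; auto. lra.
Qed.

Lemma csum_bound m u T M : (1 <= M)%nat ->
  Cmod (csum (fun n => fz m 1 u (INR n)) M - csum (fun n => fz m 1 T (INR n)) M)%C <=
  2 * Rabs (u - T) * ln (INR M) ^ (S m) * (1 + ln (INR M)).
Proof.
  intros HM. eapply Rle_trans; [apply csum_diff|].
  apply Rle_trans with (rsum (fun n => (2 * Rabs (u - T) * ln (INR M) ^ (S m)) * / INR n) M).
  - apply rsum_le. intros n Hn. eapply Rle_trans; [apply term_diff; lia|].
    assert (Hn1 : 1 <= INR n) by (apply (le_INR 1); lia).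
    assert (Hnm : INR n <= INR M) by (apply le_INR; lia).
    apply Rmult_le_compat_r; [left; apply Rinv_0_lt_compat; lra|].
    apply Rmult_le_compat_l; [pose proof (Rabs_pos (u - T)); lra|].
    apply pow_incr. split; [apply ln_ge0; auto | apply ln_le; lra].
  - rewrite rsum_scal. apply Rmult_le_compat_l; [|apply harm; auto].
    apply Rmult_le_pos; [pose proof (Rabs_pos (u - T)); lra | apply pow_le, ln_ge0, (le_INR 1); auto].
Qed.

Lemma Cmod5 a b c d e : Cmod (a + b + c + d + e)%C <= Cmod a + Cmod b + Cmod c + Cmod d + Cmod e.
Proof.
  pose proof (Cmod_triangle (a + b + c + d) e). pose proof (Cmod_triangle (a + b + c) d).
  pose proof (Cmod_triangle (a + b) c). pose proof (Cmod_triangle a b). lra.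
Qed.

Lemma lnT_ge1 T : 3 <= T -> 1 <= ln T.
Proof. intros HT. rewrite <- (ln_exp 1). apply ln_le; [apply exp_pos|]. pose proof exp_le_3. lra. Qed.

Lemma Delta_le1 m T : 3 <= T -> 0 < DeltaT m T <= 1.
Proof.
  intros HT. pose proof (lnT_ge1 T HT). unfold DeltaT.
  assert (1 <= ln T ^ (m + 2)) by (rewrite <- (pow1 (m + 2)); apply pow_incr; lra).
  split; [apply Rinv_0_lt_compat; lra|]. rewrite <- Rinv_1. apply Rinv_le_contravar; lra.
Qed.

Definition Klip (m : nat) : R :=
  2 * 4 ^ (m + 2) + 2 * (2 * INR (Factorial.fact (S m)) * 4 ^ m * INR m ^ m) + 2 * (2 * (INR m + 3) * K8 m).

Lemma lip m T u : 3 <= T -> Rabs (u - T) <= DeltaT m T ->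
  Cmod (DM m 1 u 1 - DM m 1 T 1)%C <= Klip m.
Proof.
  intros HT Hu. pose proof (lnT_ge1 T HT) as HL. set (L := ln T) in *.
  destruct (Delta_le1 m T HT) as [HD0 HD1].
  assert (Hu1 : T - 1 <= u <= T + 1) by (apply Rabs_le_between' in Hu || (apply Rabs_def2b in Hu); lra).
  destruct (choose_M T ltac:(lra)) as [M [HM [HM1 HM2]]].
  assert (HMpos : 1 <= INR M) by (apply (le_INR 1); auto).
  assert (HlnM0 : 0 <= ln (INR M)) by (apply ln_ge0; auto).
  assert (HlnM : 1 + ln (INR M) <= 4 * L).
  { assert (ln (INR M) <= ln (2 * (T * T))) by (apply ln_le; nra).
    rewrite ln_mult, ln_mult in H by nra. pose proof (ln_le_sub1 2 ltac:(lra)). fold L in H. lra. }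
  rewrite <- (DM_indep m 1 u M), <- (DM_indep m 1 T M) by (auto; lra).
  rewrite !DM_split. unfold AM.
  set (Su := csum (fun n => fz m 1 u (INR n)) M). set (ST := csum (fun n => fz m 1 T (INR n)) M).
  replace (Su - Gz m 1 u (INR M) + (tre m 1 u M, tim m 1 u M) - (ST - Gz m 1 T (INR M) + (tre m 1 T M, tim m 1 T M)))%C
    with ((Su - ST) + (- Gz m 1 u (INR M)) + Gz m 1 T (INR M) + (tre m 1 u M, tim m 1 u M) + (- (tre m 1 T M, tim m 1 T M)))%C by ring.
  eapply Rle_trans; [apply Cmod5|]. rewrite !Cmod_opp.
  assert (B1 : Cmod (Su - ST) <= 2 * 4 ^ (m + 2)).
  { eapply Rle_trans; [apply csum_bound; auto|].
    apply Rle_trans with (2 * DeltaT m T * (1 + ln (INR M)) ^ (m + 2)).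
    - replace (m + 2)%nat with (S (S m)) by lia.
      assert (ln (INR M) ^ S m <= (1 + ln (INR M)) ^ S m) by (apply pow_incr; lra).
      assert (0 <= ln (INR M) ^ S m) by (apply pow_le; lra).
      pose proof (Rabs_pos (u - T)).
      replace ((1 + ln (INR M)) ^ S (S m)) with ((1 + ln (INR M)) ^ S m * (1 + ln (INR M))) by (simpl; ring).
      rewrite <- !Rmult_assoc. apply Rmult_le_compat_r; [lra|].
      rewrite !Rmult_assoc. apply Rmult_le_compat_l; [lra|]. apply prod_le; split; lra.
    - unfold DeltaT. fold L.
      apply Rle_trans with (2 * / L ^ (m + 2) * (4 * L) ^ (m + 2)).
      + apply Rmult_le_compat_l; [apply Rmult_le_pos; [lra | left; apply Rinv_0_lt_compat, pow_lt; lra]|].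
        apply pow_incr; lra.
      + rewrite Rpow_mult_distr. right. field. apply pow_nonzero; lra. }
  set (F := INR (Factorial.fact (S m))).
  assert (LmT : L ^ m <= INR m ^ m * T).
  { pose proof (zle_pow L 1 m ltac:(lra) ltac:(lra)) as Z. rewrite Rdiv_1_r, Rmult_1_l in Z.
    unfold L in Z. rewrite exp_ln in Z by lra. exact Z. }
  assert (BG : forall x, T - 1 <= x <= T + 1 -> Cmod (Gz m 1 x (INR M)) <= 2 * F * 4 ^ m * INR m ^ m).
  { intros x Hx. unfold Gz.
    pose proof (Cmod_wof 1 x) as Hw. rewrite Rabs_right in Hw by lra.
    eapply Rle_trans; [apply H_bound; lra|].
    unfold wof at 1. simpl fst. replace ((1 - 1) * ln (INR M)) with 0 by ring. rewrite exp_0, Rmult_1_l.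
    fold F. assert (HF : 0 <= F) by apply pos_INR.
    apply Rle_trans with (F * (4 * L) ^ m / (T / 2)).
    - unfold Rdiv. apply Rmult_le_compat.
      + apply Rmult_le_pos; [lra | apply pow_le; lra].
      + left; apply Rinv_0_lt_compat; lra.
      + apply Rmult_le_compat_l; auto. apply pow_incr; lra.
      + apply Rinv_le_contravar; lra.
    - rewrite Rpow_mult_distr.
      replace (F * (4 ^ m * L ^ m) / (T / 2)) with (2 * F * 4 ^ m * (L ^ m / T)) by (field; lra).
      assert (0 <= 2 * F * 4 ^ m) by (apply Rmult_le_pos; [lra | apply pow_le; lra]).
      apply Rmult_le_compat_l; auto.
      apply Rmult_le_reg_r with T; [lra|]. unfold Rdiv. rewrite Rmult_assoc, Rinv_l by lra. lra. }
  assert (HvM : vv M <= / T).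
  { unfold vv. apply Rinv_le_contravar; [lra|].
    rewrite <- (sqrt_pow2 T) by lra. apply sqrt_le_1_alt. simpl. lra. }
  assert (BT : forall x, T - 1 <= x <= T + 1 -> Cmod (tre m 1 x M, tim m 1 x M) <= 2 * (INR m + 3) * K8 m).
  { intros x Hx. eapply Rle_trans; [apply Cmod_le_sum|]. simpl fst; simpl snd.
    destruct (tail_ok m 1 x M HM ltac:(lra) ltac:(lra)) as [[_ T1] [_ T2]].
    rewrite Rabs_right with (r := x) in T1, T2 by lra.
    assert (0 < K8 m) by apply K8_pos.
    assert ((INR m + 1 + x) * K8 m * vv M <= (INR m + 3) * K8 m).
    { apply Rle_trans with ((INR m + 1 + x) * K8 m * / T).
      - apply Rmult_le_compat_l; auto. apply Rmult_le_pos; [pose proof (pos_INR m); lra | lra].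
      - replace ((INR m + 1 + x) * K8 m * / T) with (K8 m * ((INR m + 1 + x) / T)) by (field; lra).
        replace ((INR m + 3) * K8 m) with (K8 m * (INR m + 3)) by ring.
        apply Rmult_le_compat_l; [lra|]. apply Rmult_le_reg_r with T; [lra|].
        unfold Rdiv. rewrite Rmult_assoc, Rinv_l by lra. pose proof (pos_INR m). nra. }
    lra. }
  pose proof (BG u Hu1). pose proof (BG T ltac:(lra)). pose proof (BT u Hu1). pose proof (BT T ltac:(lra)).
  unfold Klip. fold F. lra.
Qed.


Lemma Klip_nonneg m : 0 <= Klip m.
Proof.
  unfold Klip. pose proof (pos_INR (Factorial.fact (S m))). pose proof (pos_INR m). pose proof (K8_nonneg m).
  assert (0 <= 4 ^ (m + 2)) by (apply pow_le; lra). assert (0 <= 4 ^ m) by (apply pow_le; lra).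
  assert (0 <= INR m ^ m) by (apply pow_le; lra).
  assert (0 <= 2 * INR (Factorial.fact (S m)) * 4 ^ m * INR m ^ m).
  { apply Rmult_le_pos; [apply Rmult_le_pos; [apply Rmult_le_pos|]|]; lra. }
  assert (0 <= 2 * (INR m + 3) * K8 m) by (apply Rmult_le_pos; [apply Rmult_le_pos|]; lra). lra.
Qed.

Lemma Rpower_ge1 x e : 1 <= x -> 0 <= e -> 1 <= Rpower x e.
Proof. intros. rewrite <- (Rpower_O x) by lra. apply Rle_Rpower; lra. Qed.

Lemma dir12 m : (forall eps : R, 0 < eps ->
     exists C t0 : R, forall t : R, t0 <= t ->
       zeta_abs m t <= C * Rpower (ln t) eps) ->
  (forall eps : R, 0 < eps -> forall k : nat, (1 <= k)%nat ->
     exists C T0 : R, exp 1 < T0 /\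
       forall T : R, T0 <= T ->
         exists pr : Riemann_integrable (fun t => zeta_abs m t ^ (2 * k))
                                         (T - DeltaT m T) (T + DeltaT m T),
           / (2 * DeltaT m T) * RiemannInt pr <= C * Rpower (ln T) eps).
Proof.
  intros P1 eps He k Hk.
  assert (Hk' : 0 < INR (2 * k)) by (apply lt_0_INR; lia).
  set (e' := eps / INR (2 * k)). assert (He' : 0 < e') by (apply Rdiv_lt_0_compat; lra).
  destruct (P1 e' He') as [C [t0 Ht0]].
  exists (Rabs C ^ (2 * k) * Rpower 2 eps), (Rmax 3 (t0 + 1) + 1).
  pose proof (Rmax_l 3 (t0 + 1)). pose proof (Rmax_r 3 (t0 + 1)).
  split; [pose proof exp_le_3; lra|].
  intros T HT. destruct (Delta_le1 m T ltac:(lra)) as [HD0 HD1].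
  set (a := T - DeltaT m T). set (b := T + DeltaT m T).
  assert (Hab : a <= b) by (unfold a, b; lra).
  assert (pr : Riemann_integrable (fun t => zeta_abs m t ^ (2 * k)) a b).
  { apply continuity_implies_RiemannInt; auto. intros x Hx. apply zabs_cont. unfold a in Hx; lra. }
  exists pr.
  pose proof (lnT_ge1 T ltac:(lra)) as HL.
  set (B := (Rabs C * Rpower (2 * ln T) e') ^ (2 * k)).
  assert (HB : forall x, a < x < b -> zeta_abs m x ^ (2 * k) <= B).
  { intros x Hx. unfold a, b in Hx.
    assert (Hx0 : 0 < ln x) by (rewrite <- ln_1; apply ln_increasing; lra).
    assert (Hx1 : ln x <= 2 * ln T).
    { replace (2 * ln T) with (ln (T * T)) by (rewrite ln_mult by lra; ring). apply ln_le; nra. }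
    pose proof (Ht0 x ltac:(lra)) as Z.
    assert (Hz : 0 <= zeta_abs m x) by apply sqrt_pos.
    assert (R1 : Rpower (ln x) e' <= Rpower (2 * ln T) e') by (apply Rle_Rpower_l; lra).
    assert (R0 : 0 < Rpower (ln x) e') by apply exp_pos.
    assert (C <= Rabs C) by apply Rle_abs.
    assert (Z2 : zeta_abs m x <= Rabs C * Rpower (2 * ln T) e').
    { apply Rle_trans with (Rabs C * Rpower (ln x) e'); [nra|].
      apply Rmult_le_compat_l; [apply Rabs_pos | auto]. }
    unfold B. apply pow_incr; lra. }
  assert (EB : B = Rabs C ^ (2 * k) * Rpower 2 eps * Rpower (ln T) eps).
  { unfold B. rewrite Rpow_mult_distr. rewrite Rmult_assoc. f_equal.
    rewrite <- Rpower_pow by apply exp_pos. rewrite Rpower_mult.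
    replace (e' * INR (2 * k)) with eps by (unfold e'; field; lra).
    rewrite Rpower_mult_distr; auto; lra. }
  rewrite <- EB.
  pose proof (RiemannInt_P19 pr (RiemannInt_P14 a b B) Hab HB) as I1.
  rewrite RiemannInt_P15 in I1.
  replace (b - a) with (2 * DeltaT m T) in I1 by (unfold a, b; ring).
  apply Rmult_le_reg_l with (2 * DeltaT m T); [lra|].
  rewrite <- Rmult_assoc, Rinv_r, Rmult_1_l by lra. lra.
Qed.

Lemma dir21 m :
  (forall eps : R, 0 < eps -> forall k : nat, (1 <= k)%nat ->
     exists C T0 : R, exp 1 < T0 /\
       forall T : R, T0 <= T ->
         exists pr : Riemann_integrable (fun t => zeta_abs m t ^ (2 * k))
                                         (T - DeltaT m T) (T + DeltaT m T),
           / (2 * DeltaT m T) * RiemannInt pr <= C * Rpower (ln T) eps) ->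
  (forall eps : R, 0 < eps ->
     exists C t0 : R, forall t : R, t0 <= t ->
       zeta_abs m t <= C * Rpower (ln t) eps).
Proof.
  intros P2 eps He.
  destruct (P2 (2 * eps) ltac:(lra) 1%nat ltac:(lia)) as [C [T0 [HT0 HP]]].
  exists (Klip m + sqrt (Rabs C)), (Rmax T0 3).
  intros t Ht. pose proof (Rmax_l T0 3). pose proof (Rmax_r T0 3).
  destruct (HP t ltac:(lra)) as [pr Hpr].
  pose proof (lnT_ge1 t ltac:(lra)) as HL.
  set (Rp := Rpower (ln t) eps).
  assert (HR : 1 <= Rp) by (apply Rpower_ge1; lra).
  pose proof (Klip_nonneg m) as HK.
  assert (Hs : 0 <= sqrt (Rabs C)) by apply sqrt_pos.
  destruct (Delta_le1 m t ltac:(lra)) as [HD0 HD1].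
  set (z := zeta_abs m t).
  destruct (Rle_or_lt z (Klip m)) as [Hz|Hz].
  - apply Rle_trans with (Klip m); auto. nra.
  - set (y := z - Klip m). assert (Hy : 0 < y) by (unfold y; lra).
    set (a := t - DeltaT m t). set (b := t + DeltaT m t).
    assert (Hab : a <= b) by (unfold a, b; lra).
    assert (HB : forall x, a < x < b -> y ^ 2 <= zeta_abs m x ^ (2 * 1)).
    { intros x Hx. unfold a, b in Hx.
      assert (Hxl : Rabs (x - t) <= DeltaT m t) by (apply Rabs_le; lra).
      pose proof (lip m t x ltac:(lra) Hxl) as Lp.
      assert (Cmod (DM m 1 t 1) <= Cmod (DM m 1 x 1) + Cmod (DM m 1 x 1 - DM m 1 t 1)%C).
      { rewrite <- Cmod_opp with (x := (DM m 1 x 1 - DM m 1 t 1)%C).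
        replace (DM m 1 t 1) with (DM m 1 x 1 + - (DM m 1 x 1 - DM m 1 t 1))%C at 1 by ring.
        apply Cmod_triangle. }
      simpl (2 * 1)%nat. apply pow_incr. split; [lra|].
      unfold y, z. rewrite !zabs_Cmod by lra. lra. }
    pose proof (RiemannInt_P19 (RiemannInt_P14 a b (y ^ 2)) pr Hab HB) as I1.
    rewrite RiemannInt_P15 in I1.
    replace (b - a) with (2 * DeltaT m t) in I1 by (unfold a, b; ring).
    assert (Hy2 : y ^ 2 <= C * Rp ^ 2).
    { replace (Rp ^ 2) with (Rpower (ln t) (2 * eps)) by (unfold Rp; rewrite <- Rpower_pow, Rpower_mult by apply exp_pos; f_equal; simpl; ring).
      eapply Rle_trans; [|apply Hpr].
      apply Rmult_le_reg_l with (2 * DeltaT m t); [lra|].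
      rewrite <- Rmult_assoc, Rinv_r, Rmult_1_l by lra. rewrite Rmult_comm. exact I1. }
    assert (Hy3 : y <= sqrt (Rabs C) * Rp).
    { rewrite <- (sqrt_pow2 y) by lra. rewrite <- (sqrt_pow2 Rp) by lra. rewrite <- sqrt_mult_alt by apply Rabs_pos.
      apply sqrt_le_1_alt. pose proof (Rle_abs C). assert (0 <= Rp ^ 2) by (apply pow_le; lra). nra. }
    unfold y in Hy3. nra.
Qed.

Theorem theorem1 (m : nat) :
  (forall eps : R, 0 < eps ->
     exists C t0 : R, forall t : R, t0 <= t ->
       zeta_abs m t <= C * Rpower (ln t) eps)
  <->
  (forall eps : R, 0 < eps -> forall k : nat, (1 <= k)%nat ->
     exists C T0 : R, exp 1 < T0 /\
       forall T : R, T0 <= T ->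
         exists pr : Riemann_integrable (fun t => zeta_abs m t ^ (2 * k))
                                         (T - DeltaT m T) (T + DeltaT m T),
           / (2 * DeltaT m T) * RiemannInt pr <= C * Rpower (ln T) eps).
Proof. split; [apply dir12 | apply dir21]. Qed.
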